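(* Let $\Gamma$ be a regular $N\times 2$ potential game. Define $F:\mathbb{R}^N\supset\Delta\to\mathbb{R}^N$ by $F(x)=\widehat{BR}^\lambda(x)-x$, the right-hand side of the smoothed best-response dynamics $\dot{x}=\widehat{BR}^\lambda(x)-x$. Then there exists $\lambda_0>0$ such that, for all $\lambda\in(0,\lambda_0)$: - every Nash distribution $x^\lambda\in\mathrm{ND}(\lambda)$ is hyperbolic, i.e. the Jacobian $DF(x^\lambda)$ is nonsingular; - a Nash distribution is linearly stable, i.e. all eigenvalues of $DF(x^\lambda)$ have negative real part, if and only if it is a pure-strategy Nash distribution.
   Context: An $N\times 2$ game has players $i=1,\dots,N$, each with action set $A_i=\{a_i^1,a_i^2\}$, and utilities $u_i:A_1\times\cdots\times A_N\to\mathbb{R}$. It is a potential game with potential $u:A_1\times\cdots\times A_N\to\mathbb{R}$ if $u(a_i,a_{-i})-u(a_i',a_{-i})=u_i(a_i,a_{-i})-u_i(a_i',a_{-i})$ for all $i$, all $a_i,a_i'\in A_i$ and all $a_{-i}$. A mixed strategy of player $i$ is a number $x_i\in[0,1]$, the probability of playing $a_i^1$. Joint mixed strategies form $\Delta=[0,1]^N$. The multilinear extension of the potential is $$U(x)=\sum_{k_1,\dots,k_N\in\{1,2\}} z_1^{k_1}(x_1)\cdots z_N^{k_N}(x_N)\,u(a_1^{k_1},\dots,a_N^{k_N}),$$ where $z_i^1(x_i)=x_i$ and $z_i^2(x_i)=1-x_i$. We write $U(a_i^k,x_{-i})$ for the value of $U$ when player $i$ plays $a_i^k$ with probability 1 and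 the others play $x_{-i}$. The set of Nash equilibria is $\mathrm{NE}=\{x\in\Delta: U(x_i,x_{-i})\ge U(x_i',x_{-i})\ \text{for all } i \text{ and all } x_i'\in[0,1]\}$. For $\lambda>0$, the logit (smoothed) best response is $$\widehat{BR}^\lambda_i(x)=\frac{\exp(U(a_i^1,x_{-i})/\lambda)}{\sum_{k=1,2}\exp(U(a_i^k,x_{-i})/\lambda)},\qquad \widehat{BR}^\lambda(x)=(\widehat{BR}^\lambda_1(x),\dots,\widehat{BR}^\lambda_N(x)).$$ The set of Nash distributions is $\mathrm{ND}(\lambda)=\{x\in\Delta: x=\widehat{BR}^\lambda(x)\}$. Regularity. Let $x^*\in\mathrm{NE}$, and relabel each player's two actions so that $x_i^*>0$ for all $i$; thus each player either mixes ($0<x_i^*<1$) or plays $a_i^1$ purely ($x_i^*=1$). - $x^*$ is quasi-strict if, for every $i$ with $x_i^*=1$, the action $a_i^2$ is not a best response to $x_{-i}^*$, i.e. $U(a_i^1,x^*_{-i})>U(a_i^2,x^*_{-i})$. - Let the mixing players be $i=1,\dots,\tilde N$ after reordering. The restricted Hessian relative to $x^*$ is the $\tilde N\times\tilde N$ matrix $H(x)=\big(\partial^2 U(x)/\partial x_i\partial x_j\big)_{i,j=1,\dots,\tilde N}$, which may be evaluated at any $x\in\Delta$. - $x^*$ is regular if it is quasi-strict and $H(x^* )$ is invertible. - The potential game is regular if every Nash equilibrium is regular. Fact used (valid in regular potential games): $\mathrm{NE}$ is finite, and there exists $\lambda_1>0$ such that, for each $x^*\in\mathrm{NE}$, there is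 a continuous branch $\lambda\mapsto x^\lambda(x^* )\in\mathrm{ND}(\lambda)$ on $(0,\lambda_1)$ with $x^\lambda(x^* )\to x^*$ as $\lambda\to0$. For each $\lambda\in(0,\lambda_1)$ these branches are pairwise distinct and exhaust $\mathrm{ND}(\lambda)$. A Nash distribution is called a pure-strategy Nash distribution if it lies on the branch of a pure-strategy Nash equilibrium $x^*\in\{0,1\}^N$, i.e. it converges to a pure Nash equilibrium as $\lambda\to0$. *)

(* Defs.v *)
From Stdlib Require Import Reals Lra Lia Arith.
Open Scope R_scope.

(* Players are indexed by 0..N-1.  A pure action profile is a map
   nat -> bool (true = action a_i^1, false = a_i^2); only the coordinates
   < N are meaningful.  A joint mixed strategy is a map x : nat -> R,
   x i = probability that player i plays a_i^1 (coordinates < N meaningful). *)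

Definition upd_prof (a : nat -> bool) (i : nat) (b : bool) : nat -> bool :=
  fun j => if Nat.eqb j i then b else a j.

Definition upd (x : nat -> R) (i : nat) (t : R) : nat -> R :=
  fun j => if Nat.eqb j i then t else x j.

Fixpoint fsum (n : nat) (f : nat -> R) : R :=
  match n with
  | O => 0
  | S m => fsum m f + f m
  end.

(* Multilinear extension of f over the first n coordinates:
   sum over all (k_0..k_{n-1}) of prod z_i^{k_i}(x_i) * f(profile);
   coordinates >= n are set to 'true' (irrelevant). *)
Fixpoint mlext (n : nat) (f : (nat -> bool) -> R) (x : nat -> R) : R :=
  match n with
  | O => f (fun _ => true)
  | S m => x m * mlext m (fun a => f (upd_prof a m true)) x
           + (1 - x m) * mlext m (fun a => f (upd_prof a m false)) x
  end.

Definition is_potential (N : nat) (u : nat -> (nat -> bool) -> R)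
  (pot : (nat -> bool) -> R) : Prop :=
  forall (i : nat) (a : nat -> bool) (b c : bool), (i < N)%nat ->
    pot (upd_prof a i b) - pot (upd_prof a i c)
    = u i (upd_prof a i b) - u i (upd_prof a i c).

Definition Uext (N : nat) (pot : (nat -> bool) -> R) (x : nat -> R) : R :=
  mlext N pot x.

Definition in_Delta (N : nat) (x : nat -> R) : Prop :=
  forall i, (i < N)%nat -> 0 <= x i <= 1.

Definition veq (N : nat) (x y : nat -> R) : Prop :=
  forall i, (i < N)%nat -> x i = y i.

Definition is_NE (N : nat) (pot : (nat -> bool) -> R) (x : nat -> R) : Prop :=
  in_Delta N x /\
  forall i t, (i < N)%nat -> 0 <= t <= 1 ->
    Uext N pot x >= Uext N pot (upd x i t).

Definition is_pure (N : nat) (x : nat -> R) : Prop :=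
  forall i, (i < N)%nat -> x i = 0 \/ x i = 1.

Definition partial_at (f : (nat -> R) -> R) (i : nat) (x : nat -> R) (l : R)
  : Prop :=
  derivable_pt_lim (fun t => f (upd x i t)) (x i) l.

Definition second_partial (f : (nat -> R) -> R) (i j : nat) (x : nat -> R)
  (l : R) : Prop :=
  exists g : (nat -> R) -> R,
    (forall y, partial_at f j y (g y)) /\ partial_at g i x l.

Definition mixing (N : nat) (x : nat -> R) (i : nat) : Prop :=
  (i < N)%nat /\ 0 < x i < 1.

(* Quasi-strictness, stated without relabeling: a player playing a pure
   action plays it as a strict best response. *)
Definition quasi_strict (N : nat) (pot : (nat -> bool) -> R) (x : nat -> R)
  : Prop :=
  forall i, (i < N)%nat ->
    (x i = 1 -> Uext N pot (upd x i 1) > Uext N pot (upd x i 0)) /\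
    (x i = 0 -> Uext N pot (upd x i 0) > Uext N pot (upd x i 1)).

(* The restricted Hessian (rows/columns of mixing players) at x is invertible
   (as a linear map on R^{mixing players}: trivial kernel). *)
Definition restricted_hessian_invertible (N : nat) (pot : (nat -> bool) -> R)
  (x : nat -> R) : Prop :=
  exists H : nat -> nat -> R,
    (forall i j, mixing N x i -> mixing N x j ->
       second_partial (Uext N pot) i j x (H i j)) /\
    (forall v : nat -> R,
       (forall j, (j < N)%nat -> ~ mixing N x j -> v j = 0) ->
       (forall i, mixing N x i -> fsum N (fun j => H i j * v j) = 0) ->
       forall i, (i < N)%nat -> v i = 0).

Definition regular_NE (N : nat) (pot : (nat -> bool) -> R) (x : nat -> R)
  : Prop :=
  quasi_strict N pot x /\ restricted_hessian_invertible N pot x.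

Definition regular_potential_game (N : nat) (pot : (nat -> bool) -> R)
  : Prop :=
  forall x, is_NE N pot x -> regular_NE N pot x.

Definition BR (N : nat) (pot : (nat -> bool) -> R) (lam : R) (x : nat -> R)
  (i : nat) : R :=
  exp (Uext N pot (upd x i 1) / lam) /
  (exp (Uext N pot (upd x i 1) / lam) + exp (Uext N pot (upd x i 0) / lam)).

Definition is_ND (N : nat) (pot : (nat -> bool) -> R) (lam : R) (x : nat -> R)
  : Prop :=
  in_Delta N x /\ forall i, (i < N)%nat -> x i = BR N pot lam x i.

Definition Fdyn (N : nat) (pot : (nat -> bool) -> R) (lam : R) (x : nat -> R)
  (i : nat) : R :=
  BR N pot lam x i - x i.

Definition is_jacobian (N : nat) (pot : (nat -> bool) -> R) (lam : R)
  (x : nat -> R) (J : nat -> nat -> R) : Prop :=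
  forall i j, (i < N)%nat -> (j < N)%nat ->
    partial_at (fun y => Fdyn N pot lam y i) j x (J i j).

Definition nonsingular (N : nat) (J : nat -> nat -> R) : Prop :=
  forall v : nat -> R,
    (forall i, (i < N)%nat -> fsum N (fun j => J i j * v j) = 0) ->
    forall i, (i < N)%nat -> v i = 0.

(* a + i b is a (complex) eigenvalue of J: there is a nonzero complex
   eigenvector u + i w, written in real and imaginary parts. *)
Definition is_eigenvalue (N : nat) (J : nat -> nat -> R) (a b : R) : Prop :=
  exists u w : nat -> R,
    (exists i, (i < N)%nat /\ (u i <> 0 \/ w i <> 0)) /\
    forall i, (i < N)%nat ->
      fsum N (fun j => J i j * u j) = a * u i - b * w i /\
      fsum N (fun j => J i j * w j) = b * u i + a * w i.

Definition linearly_stable (N : nat) (J : nat -> nat -> R) : Prop :=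
  forall a b, is_eigenvalue N J a b -> a < 0.

(* A system of branches as provided by the Fact: for each NE xs, a
   continuous branch lam |-> branch xs lam in ND(lam) on (0,lam1) tending to
   xs as lam -> 0; pairwise distinct and exhausting ND(lam). *)
Definition is_branch_system (N : nat) (pot : (nat -> bool) -> R) (lam1 : R)
  (branch : (nat -> R) -> R -> (nat -> R)) : Prop :=
  0 < lam1 /\
  (forall xs, is_NE N pot xs ->
     (forall lam, 0 < lam < lam1 -> is_ND N pot lam (branch xs lam)) /\
     (forall i, (i < N)%nat ->
        (forall l0, 0 < l0 < lam1 ->
           limit1_in (fun l => branch xs l i) (fun l => 0 < l < lam1)
             (branch xs l0 i) l0) /\
        limit1_in (fun l => branch xs l i) (fun l => 0 < l < lam1) (xs i) 0))
  /\
  (forall lam, 0 < lam < lam1 ->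
     (forall xs ys, is_NE N pot xs -> is_NE N pot ys -> ~ veq N xs ys ->
        ~ veq N (branch xs lam) (branch ys lam)) /\
     (forall x, is_ND N pot lam x ->
        exists xs, is_NE N pot xs /\ veq N x (branch xs lam))).

Definition pure_ND (N : nat) (pot : (nat -> bool) -> R)
  (branch : (nat -> R) -> R -> (nat -> R)) (lam : R) (x : nat -> R) : Prop :=
  exists xs, is_NE N pot xs /\ is_pure N xs /\ veq N x (branch xs lam).

(* Main.v *)
Require Import Defs.
From Stdlib Require Import Reals Lra Lia Arith FunctionalExtensionality Classical ClassicalEpsilon List.
From Coquelicot Require Import Coquelicot.
Open Scope R_scope.

Lemma upd_same x i t : upd x i t i = t.
Proof. unfold upd. now rewrite Nat.eqb_refl. Qed.
Lemma upd_other x i j t : j <> i -> upd x i t j = x j.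
Proof. intros H. unfold upd. destruct (Nat.eqb_spec j i); congruence. Qed.
Lemma upd_upd_same x i a b : upd (upd x i a) i b = upd x i b.
Proof. apply functional_extensionality; intro j. unfold upd. destruct (Nat.eqb j i); auto. Qed.
Lemma upd_comm x i j a b : i <> j -> upd (upd x i a) j b = upd (upd x j b) i a.
Proof. intro H. apply functional_extensionality; intro k. unfold upd.
 destruct (Nat.eqb_spec k j), (Nat.eqb_spec k i); subst; auto; congruence. Qed.
Lemma upd_id x i : upd x i (x i) = x.
Proof. apply functional_extensionality; intro k. unfold upd. destruct (Nat.eqb_spec k i); subst; auto. Qed.

Lemma mlext_ext n : forall f x y, (forall i, (i < n)%nat -> x i = y i) -> mlext n f x = mlext n f y.
Proof.
  induction n; intros f x y H; simpl; auto.
  rewrite (IHn _ x y), (IHn (fun a => f (upd_prof a n false)) x y), (H n); auto; intros; apply H; lia.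
Qed.

Lemma mlext_affine n : forall f x j t, (j < n)%nat ->
  mlext n f (upd x j t) = t * mlext n f (upd x j 1) + (1 - t) * mlext n f (upd x j 0).
Proof.
  induction n; intros f x j t Hj; [lia|]. simpl.
  destruct (Nat.eq_dec j n).
  - subst. rewrite !upd_same.
    rewrite (mlext_ext n _ (upd x n t) x), (mlext_ext n (fun a => f (upd_prof a n false)) (upd x n t) x),
      (mlext_ext n _ (upd x n 1) x), (mlext_ext n (fun a => f (upd_prof a n false)) (upd x n 1) x),
      (mlext_ext n _ (upd x n 0) x), (mlext_ext n (fun a => f (upd_prof a n false)) (upd x n 0) x);
      try (intros; apply upd_other; lia). ring.
  - rewrite !upd_other by lia.
    rewrite (IHn _ x j t), (IHn (fun a => f (upd_prof a n false)) x j t) by lia. ring.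
Qed.


Lemma fsum_ext n f g : (forall i, (i < n)%nat -> f i = g i) -> fsum n f = fsum n g.
Proof. induction n; intros H; simpl; auto. rewrite IHn, H; auto; intros; apply H; lia. Qed.
Lemma fsum_plus n f g : fsum n (fun i => f i + g i) = fsum n f + fsum n g.
Proof. induction n; simpl; [ring|]. rewrite IHn; ring. Qed.
Lemma fsum_minus n f g : fsum n (fun i => f i - g i) = fsum n f - fsum n g.
Proof. induction n; simpl; [ring|]. rewrite IHn; ring. Qed.
Lemma fsum_scal n c f : fsum n (fun i => c * f i) = c * fsum n f.
Proof. induction n; simpl; [ring|]. rewrite IHn; ring. Qed.
Lemma fsum_scal_r n c f : fsum n (fun i => f i * c) = fsum n f * c.
Proof. induction n; simpl; [ring|]. rewrite IHn; ring. Qed.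
Lemma fsum_zero n f : (forall i, (i < n)%nat -> f i = 0) -> fsum n f = 0.
Proof. intros H. rewrite (fsum_ext n f (fun _ => 0)) by auto. clear H. induction n; simpl; auto. rewrite IHn; ring. Qed.
Lemma fsum_le n f g : (forall i, (i < n)%nat -> f i <= g i) -> fsum n f <= fsum n g.
Proof. induction n; intros H; simpl; [lra|]. assert (fsum n f <= fsum n g) by (apply IHn; intros; apply H; lia).
 specialize (H n ltac:(lia)). lra. Qed.
Lemma fsum_nonneg n f : (forall i, (i < n)%nat -> 0 <= f i) -> 0 <= fsum n f.
Proof. intros H. replace 0 with (fsum n (fun _ => 0)). apply fsum_le; auto. apply fsum_zero; auto. Qed.
Lemma fsum_term_le n f k : (forall i, (i < n)%nat -> 0 <= f i) -> (k < n)%nat -> f k <= fsum n f.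
Proof. induction n; intros H Hk; simpl; [lia|].
 assert (0 <= fsum n f) by (apply fsum_nonneg; intros; apply H; lia).
 destruct (Nat.eq_dec k n). subst; lra. assert (f k <= fsum n f) by (apply IHn; intros; [apply H|]; lia).
 specialize (H n ltac:(lia)). lra. Qed.
Lemma fsum_abs n f : Rabs (fsum n f) <= fsum n (fun i => Rabs (f i)).
Proof. induction n; simpl. rewrite Rabs_R0; lra. eapply Rle_trans. apply Rabs_triang. lra. Qed.
Lemma fsum_delta n i c : (i < n)%nat -> fsum n (fun j => if Nat.eqb j i then c else 0) = c.
Proof. induction n; intros H; simpl; [lia|]. destruct (Nat.eqb_spec n i).
 - subst. rewrite fsum_zero. ring. intros j Hj. destruct (Nat.eqb_spec j i); [lia|auto].
 - rewrite IHn by lia. ring. Qed.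
Lemma fsum_swap n m (f : nat -> nat -> R) : fsum n (fun i => fsum m (fun j => f i j)) = fsum m (fun j => fsum n (fun i => f i j)).
Proof. induction n; simpl. rewrite fsum_zero; auto. rewrite IHn, <- fsum_plus. reflexivity. Qed.
Lemma fsum_all0 n f : (forall i, (i < n)%nat -> 0 <= f i) -> fsum n f = 0 -> forall i, (i < n)%nat -> f i = 0.
Proof. intros H Hs i Hi. pose proof (fsum_term_le n f i H Hi). specialize (H i Hi). lra. Qed.

Definition d1 (n : nat) (x y : nat -> R) := fsum n (fun i => Rabs (x i - y i)).

Lemma in_Delta_S n x : in_Delta (S n) x -> in_Delta n x.
Proof. intros H i Hi; apply H; lia. Qed.

Lemma mlext_bound n : forall f, exists M, forall x, in_Delta n x -> Rabs (mlext n f x) <= M.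
Proof.
  induction n; intros f; simpl.
  - exists (Rabs (f (fun _ => true))); intros; lra.
  - destruct (IHn (fun a => f (upd_prof a n true))) as [M1 H1].
    destruct (IHn (fun a => f (upd_prof a n false))) as [M2 H2].
    exists (M1 + M2). intros x Hx. specialize (H1 x (in_Delta_S _ _ Hx)). specialize (H2 x (in_Delta_S _ _ Hx)).
    specialize (Hx n ltac:(lia)).
    eapply Rle_trans. apply Rabs_triang. rewrite !Rabs_mult.
    rewrite (Rabs_right (x n)), (Rabs_right (1 - x n)) by lra.
    assert (0 <= M1) by (eapply Rle_trans; [apply Rabs_pos|apply H1]).
    assert (0 <= M2) by (eapply Rle_trans; [apply Rabs_pos|apply H2]).
    nra.
Qed.

Lemma mlext_lip n : forall f, exists L, 0 <= L /\ forall x y, in_Delta n x -> in_Delta n y ->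
  Rabs (mlext n f x - mlext n f y) <= L * d1 n x y.
Proof.
  induction n; intros f; simpl.
  - exists 0. split; [lra|]. intros. unfold d1; simpl. rewrite Rminus_diag, Rabs_R0; lra.
  - destruct (IHn (fun a => f (upd_prof a n true))) as [L1 [HL1 H1]].
    destruct (IHn (fun a => f (upd_prof a n false))) as [L2 [HL2 H2]].
    destruct (mlext_bound n (fun a => f (upd_prof a n true))) as [M1 B1].
    destruct (mlext_bound n (fun a => f (upd_prof a n false))) as [M2 B2].
    exists (L1 + L2 + M1 + M2 + 1).
    assert (0 <= M1). { eapply Rle_trans; [apply Rabs_pos|apply (B1 (fun _ => 0))]. intros i _; lra. }
    assert (0 <= M2). { eapply Rle_trans; [apply Rabs_pos|apply (B2 (fun _ => 0))]. intros i _; lra. }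
    split; [lra|]. intros x y Hx Hy.
    set (A := fun a => f (upd_prof a n true)). set (B := fun a => f (upd_prof a n false)).
    pose proof (H1 x y (in_Delta_S _ _ Hx) (in_Delta_S _ _ Hy)) as E1.
    pose proof (H2 x y (in_Delta_S _ _ Hx) (in_Delta_S _ _ Hy)) as E2.
    pose proof (B1 x (in_Delta_S _ _ Hx)) as F1. pose proof (B2 x (in_Delta_S _ _ Hx)) as F2.
    fold A B in E1, E2, F1, F2.
    assert (Hd : d1 (S n) x y = d1 n x y + Rabs (x n - y n)) by reflexivity.
    assert (0 <= d1 n x y) by (apply fsum_nonneg; intros; apply Rabs_pos).
    pose proof (Hy n ltac:(lia)).
    replace (x n * mlext n A x + (1 - x n) * mlext n B x - (y n * mlext n A y + (1 - y n) * mlext n B y))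
      with ((x n - y n) * (mlext n A x - mlext n B x) + y n * (mlext n A x - mlext n A y)
            + (1 - y n) * (mlext n B x - mlext n B y)) by ring.
    rewrite Hd.
    eapply Rle_trans. apply Rabs_triang. eapply Rle_trans. apply Rplus_le_compat_r. apply Rabs_triang.
    rewrite !Rabs_mult. rewrite (Rabs_right (y n)), (Rabs_right (1 - y n)) by lra.
    assert (Rabs (mlext n A x - mlext n B x) <= M1 + M2).
    { unfold Rminus. eapply Rle_trans. apply Rabs_triang. rewrite Rabs_Ropp. lra. }
    pose proof (Rabs_pos (x n - y n)).
    pose proof (Rabs_pos (mlext n A x - mlext n A y)). pose proof (Rabs_pos (mlext n B x - mlext n B y)).
    nra.
Qed.

Lemma mlext_pure_vals n : forall f, exists l : list R, forall p, (forall i, (i < n)%nat -> p i = 0 \/ p i = 1) ->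
  In (mlext n f p) l.
Proof.
  induction n; intros f; simpl.
  - exists (f (fun _ => true) :: nil). intros; simpl; auto.
  - destruct (IHn (fun a => f (upd_prof a n true))) as [l1 H1].
    destruct (IHn (fun a => f (upd_prof a n false))) as [l2 H2].
    exists (l1 ++ l2). intros p Hp. apply in_or_app.
    destruct (Hp n ltac:(lia)) as [E|E]; rewrite E.
    + right. replace (0 * mlext n (fun a => f (upd_prof a n true)) p + (1 - 0) * mlext n (fun a => f (upd_prof a n false)) p)
        with (mlext n (fun a => f (upd_prof a n false)) p) by ring. apply H2; intros; apply Hp; lia.
    + left. replace (1 * mlext n (fun a => f (upd_prof a n true)) p + (1 - 1) * mlext n (fun a => f (upd_prof a n false)) p)
        with (mlext n (fun a => f (upd_prof a n true)) p) by ring. apply H1; intros; apply Hp; lia.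
Qed.

Lemma cv_const c : Un_cv (fun _ => c) c.
Proof. intros e He; exists 0%nat; intros; unfold R_dist; rewrite Rminus_diag, Rabs_R0; lra. Qed.

Lemma mlext_cv n : forall f (s : nat -> nat -> R) x, (forall i, (i < n)%nat -> Un_cv (fun k => s k i) (x i)) ->
  Un_cv (fun k => mlext n f (s k)) (mlext n f x).
Proof.
  induction n; intros f s x H; simpl.
  - intros e He. exists 0%nat. intros. unfold R_dist. rewrite Rminus_diag, Rabs_R0; lra.
  - assert (Hn : Un_cv (fun k => s k n) (x n)) by (apply H; lia).
    apply CV_plus; apply CV_mult.
    + exact Hn.
    + apply IHn; intros; apply H; lia.
    + apply CV_minus. apply cv_const. exact Hn.
    + apply IHn; intros; apply H; lia.
Qed.

Lemma fsum_cv n (a : nat -> nat -> R) l : (forall j, (j < n)%nat -> Un_cv (fun k => a k j) (l j)) ->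
  Un_cv (fun k => fsum n (a k)) (fsum n l).
Proof. induction n; intros H; simpl.
 - intros e He. exists 0%nat. intros. unfold R_dist. rewrite Rminus_diag, Rabs_R0; lra.
 - apply CV_plus. apply IHn; intros; apply H; lia. apply H; lia. Qed.



Lemma list_min_pos (l : list R) : exists c, 0 < c /\ forall v, In v l -> v <> 0 -> c <= Rabs v.
Proof. induction l as [|a l [c [Hc H]]].
 - exists 1; split; [lra|]; intros v [].
 - destruct (Req_dec a 0).
   + exists c; split; auto. intros v [<-|Hv] Hn; [congruence|auto].
   + exists (Rmin c (Rabs a)). split. apply Rmin_pos; auto. apply Rabs_pos_lt; auto.
     intros v [<-|Hv] Hn. apply Rmin_r. eapply Rle_trans. apply Rmin_l. auto.
Qed.

Definition incr (phi : nat -> nat) := forall k, (phi k < phi (S k))%nat.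
Lemma incr_ge phi : incr phi -> forall k, (k <= phi k)%nat.
Proof. intros H k; induction k; [lia|]. specialize (H k); lia. Qed.
Lemma incr_mono phi : incr phi -> forall a b, (a <= b)%nat -> (phi a <= phi b)%nat.
Proof. intros H a b Hab; induction Hab; auto. specialize (H m); lia. Qed.
Lemma incr_comp f g : incr f -> incr g -> incr (fun k => f (g k)).
Proof. intros Hf Hg k. pose proof (Hg k). pose proof (incr_mono f Hf (S (g k)) (g (S k)) ltac:(lia)).
 specialize (Hf (g k)). lia. Qed.
Lemma cv_sub u l phi : Un_cv u l -> incr phi -> Un_cv (fun k => u (phi k)) l.
Proof. intros H Hp e He. destruct (H e He) as [M HM]. exists M. intros n Hn. apply HM.
 pose proof (incr_ge phi Hp n). lia. Qed.

Fixpoint build (sel : nat -> nat -> nat) (k : nat) : nat :=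
  match k with O => sel O O | S k' => sel (S (build sel k')) k end.

Lemma bw1 (u : nat -> R) B : (forall k, Rabs (u k) <= B) ->
  exists phi, incr phi /\ exists l, Un_cv (fun k => u (phi k)) l.
Proof.
  intros HB.
  destruct (Bolzano_Weierstrass u (fun c => -B <= c <= B) (compact_P3 (-B) B)) as [l Hl].
  { intros k. specialize (HB k). unfold Rabs in HB; destruct (Rcase_abs (u k)); lra. }
  assert (H : forall N k, exists p, (N <= p)%nat /\ Rabs (u p - l) < / (INR k + 1)).
  { intros N k. assert (Hpos : 0 < / (INR k + 1)) by (apply Rinv_0_lt_compat; pose proof (pos_INR k); lra).
    destruct (Hl (fun y => Rabs (y - l) < / (INR k + 1)) N) as [p [Hp Hv]].
    - exists (mkposreal _ Hpos). intros y Hy. exact Hy.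
    - exists p; auto. }
  set (sel := fun N k => proj1_sig (constructive_indefinite_description _ (H N k))).
  assert (Hsel : forall N k, (N <= sel N k)%nat /\ Rabs (u (sel N k) - l) < / (INR k + 1)).
  { intros N k. unfold sel. destruct (constructive_indefinite_description _ (H N k)); auto. }
  exists (build sel). split.
  - intros k. simpl. destruct (Hsel (S (build sel k)) (S k)); lia.
  - exists l. intros e He. destruct (archimed_cor1 e He) as [M [HM HM0]]. exists M. intros n Hn.
    unfold R_dist.
    assert (Hb : Rabs (u (build sel n) - l) < / (INR n + 1)).
    { destruct n; simpl; apply Hsel. }
    eapply Rlt_trans. exact Hb. eapply Rle_lt_trans; [|exact HM].
    apply Rinv_le_contravar. apply lt_0_INR; lia. apply le_INR in Hn. lra.
Qed.

Lemma bwN n : forall (s : nat -> nat -> R) B, (forall k i, (i < n)%nat -> Rabs (s k i) <= B) ->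
  exists phi, incr phi /\ exists l, forall i, (i < n)%nat -> Un_cv (fun k => s (phi k) i) (l i).
Proof.
  induction n; intros s B H.
  - exists (fun k => k). split. intros k; lia. exists (fun _ => 0). intros; lia.
  - destruct (IHn s B) as [p1 [Hp1 [l1 Hl1]]]. intros; apply H; lia.
    destruct (bw1 (fun k => s (p1 k) n) B) as [p2 [Hp2 [a Ha]]]. intros; apply H; lia.
    exists (fun k => p1 (p2 k)). split. apply incr_comp; auto.
    exists (fun i => if Nat.eqb i n then a else l1 i). intros i Hi.
    destruct (Nat.eqb_spec i n). subst; auto.
    apply (cv_sub (fun k => s (p1 k) i)); auto. apply Hl1; lia.
Qed.

Definition dU N pot i x := Uext N pot (upd x i 1) - Uext N pot (upd x i 0).
Definition G N pot i j x := dU N pot i (upd x j 1) - dU N pot i (upd x j 0).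
Definition Jf N pot lam x i j :=
  x i * (1 - x i) * G N pot i j x / lam - (if Nat.eqb i j then 1 else 0).

Lemma U_affine N pot x j t : (j < N)%nat ->
  Uext N pot (upd x j t) = t * Uext N pot (upd x j 1) + (1 - t) * Uext N pot (upd x j 0).
Proof. intros; unfold Uext; apply mlext_affine; auto. Qed.

Lemma dU_upd_same N pot i x t : dU N pot i (upd x i t) = dU N pot i x.
Proof. unfold dU. now rewrite !upd_upd_same. Qed.

Lemma G_diag N pot i x : G N pot i i x = 0.
Proof. unfold G. rewrite !dU_upd_same. ring. Qed.

Lemma G_sym N pot i j x : G N pot i j x = G N pot j i x.
Proof. destruct (Nat.eq_dec i j). subst; auto.
 unfold G, dU. rewrite !(upd_comm x j i) by auto. ring. Qed.

Lemma deriv_affine a b z : derivable_pt_lim (fun t => t * a + (1 - t) * b) z (a - b).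
Proof. apply is_derive_Reals. auto_derive; auto. ring. Qed.

Lemma partial_U N pot j y : (j < N)%nat -> partial_at (Uext N pot) j y (dU N pot j y).
Proof. intros Hj. unfold partial_at, dU.
 replace (fun t => Uext N pot (upd y j t)) with (fun t => t * Uext N pot (upd y j 1) + (1 - t) * Uext N pot (upd y j 0)).
 apply deriv_affine. apply functional_extensionality; intro t. symmetry; apply U_affine; auto. Qed.

Lemma BR_bounds N pot lam x i : 0 < BR N pot lam x i < 1.
Proof. unfold BR. set (a := exp _). set (b := exp _). assert (0 < a) by apply exp_pos. assert (0 < b) by apply exp_pos.
 split. apply Rdiv_lt_0_compat; lra. apply Rmult_lt_reg_r with (a + b). lra. unfold Rdiv. rewrite Rmult_assoc, Rinv_l by lra. lra. Qed.

Lemma jac_formula N pot lam x J : 0 < lam -> is_ND N pot lam x -> is_jacobian N pot lam x J ->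
  forall i j, (i < N)%nat -> (j < N)%nat -> J i j = Jf N pot lam x i j.
Proof.
  intros Hl [HD HND] HJ i j Hi Hj. specialize (HJ i j Hi Hj). unfold partial_at, Fdyn in HJ.
  unfold Jf. destruct (Nat.eq_dec i j) as [<-|Hne].
  - rewrite Nat.eqb_refl, G_diag.
    replace (fun t => BR N pot lam (upd x i t) i - upd x i t i) with (fun t => BR N pot lam x i - t) in HJ.
    2:{ apply functional_extensionality; intro t. unfold BR. rewrite !upd_upd_same, upd_same. reflexivity. }
    assert (derivable_pt_lim (fun t => BR N pot lam x i - t) (x i) (-1)).
    { apply is_derive_Reals. auto_derive; auto. }
    rewrite (uniqueness_limite _ _ _ _ HJ H). field. lra.
  - replace (Nat.eqb i j) with false by (symmetry; apply Nat.eqb_neq; auto).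
    set (A1 := Uext N pot (upd (upd x i 1) j 1)). set (A0 := Uext N pot (upd (upd x i 1) j 0)).
    set (B1 := Uext N pot (upd (upd x i 0) j 1)). set (B0 := Uext N pot (upd (upd x i 0) j 0)).
    replace (fun t => BR N pot lam (upd x j t) i - upd x j t i) with
      (fun t => exp ((t * A1 + (1 - t) * A0) / lam) / (exp ((t * A1 + (1 - t) * A0) / lam) + exp ((t * B1 + (1 - t) * B0) / lam)) - x i) in HJ.
    2:{ apply functional_extensionality; intro t. unfold BR. rewrite upd_other by auto.
        rewrite !(upd_comm x j i) by auto. unfold A1, A0, B1, B0. rewrite <- !U_affine by auto. reflexivity. }
    assert (Hxi : x i = exp ((x j * A1 + (1 - x j) * A0) / lam) / (exp ((x j * A1 + (1 - x j) * A0) / lam) + exp ((x j * B1 + (1 - x j) * B0) / lam))).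
    { rewrite (HND i Hi). unfold BR, A1, A0, B1, B0. rewrite <- !U_affine by auto.
      rewrite <- !(upd_comm x j i) by auto. rewrite !upd_id. reflexivity. }
    assert (HG : G N pot i j x = (A1 - B1) - (A0 - B0)).
    { unfold G, dU, A1, A0, B1, B0. rewrite !(upd_comm x j i) by auto. reflexivity. }
    rewrite HG. rewrite Hxi. clear Hxi HG.
    set (a := exp ((x j * A1 + (1 - x j) * A0) / lam)). set (b := exp ((x j * B1 + (1 - x j) * B0) / lam)).
    assert (0 < a) by apply exp_pos. assert (0 < b) by apply exp_pos.
    assert (Hd : derivable_pt_lim (fun t => exp ((t * A1 + (1 - t) * A0) / lam) / (exp ((t * A1 + (1 - t) * A0) / lam) + exp ((t * B1 + (1 - t) * B0) / lam)) - x i) (x j)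
       (a / (a + b) * (1 - a / (a + b)) * (A1 - B1 - (A0 - B0)) / lam)).
    { apply is_derive_Reals. auto_derive;
      (replace (exp ((x j * A1 + (1 + - x j) * A0) * / lam)) with a by (unfold a; f_equal; unfold Rdiv, Rminus; ring));
      (replace (exp ((x j * B1 + (1 + - x j) * B0) * / lam)) with b by (unfold b; f_equal; unfold Rdiv, Rminus; ring)).
      - lra.
      - field. split; lra. }
    rewrite (uniqueness_limite _ _ _ _ HJ Hd). ring.
Qed.

Lemma dU_affine N pot j x i t : (i < N)%nat ->
  dU N pot j (upd x i t) = t * dU N pot j (upd x i 1) + (1 - t) * dU N pot j (upd x i 0).
Proof. intros Hi. destruct (Nat.eq_dec i j) as [<-|Hne].
 - rewrite !dU_upd_same. ring.
 - unfold dU. rewrite !(upd_comm x i j) by auto. rewrite (U_affine N pot (upd x j 1) i t), (U_affine N pot (upd x j 0) i t) by auto. ring. Qed.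

Lemma hess_id N pot i j x h : (i < N)%nat -> (j < N)%nat ->
  second_partial (Uext N pot) i j x h -> h = G N pot j i x.
Proof.
  intros Hi Hj [g [Hg Hgi]].
  assert (Eg : g = dU N pot j).
  { apply functional_extensionality; intro y. eapply uniqueness_limite. apply Hg. apply partial_U; auto. }
  subst g. unfold partial_at in Hgi.
  replace (fun t => dU N pot j (upd x i t)) with (fun t => t * dU N pot j (upd x i 1) + (1 - t) * dU N pot j (upd x i 0)) in Hgi.
  2:{ apply functional_extensionality; intro t; symmetry; apply dU_affine; auto. }
  eapply uniqueness_limite. apply Hgi. apply deriv_affine.
Qed.

Lemma fsum_const n c : fsum n (fun _ => c) = INR n * c.
Proof. induction n; simpl fsum; [simpl; ring|]. rewrite IHn, S_INR; ring. Qed.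

Lemma fsum_kron n i v : (i < n)%nat -> fsum n (fun j => (if Nat.eqb i j then 1 else 0) * v j) = v i.
Proof. intros H. rewrite <- (fsum_delta n i (v i) H). apply fsum_ext; intros j Hj.
 destruct (Nat.eqb_spec i j), (Nat.eqb_spec j i); subst; try ring; congruence. Qed.

Lemma double_abs_bound n (u : nat -> R) :
  fsum n (fun i => fsum n (fun j => Rabs (u i) * Rabs (u j))) <= INR n * fsum n (fun i => u i * u i).
Proof.
  assert (H : fsum n (fun i => fsum n (fun j => Rabs (u i) * Rabs (u j))) <=
              fsum n (fun i => fsum n (fun j => (u i * u i + u j * u j) / 2))).
  { apply fsum_le; intros i _; apply fsum_le; intros j _.
    assert (Rabs (u i) * Rabs (u i) = u i * u i) by (rewrite <- Rabs_mult; apply Rabs_right; nra).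
    assert (Rabs (u j) * Rabs (u j) = u j * u j) by (rewrite <- Rabs_mult; apply Rabs_right; nra).
    pose proof (Rle_0_sqr (Rabs (u i) - Rabs (u j))). unfold Rsqr in *. nra. }
  eapply Rle_trans; [exact H|].
  replace (fun i => fsum n (fun j => (u i * u i + u j * u j) / 2)) with
    (fun i => INR n * (u i * u i) / 2 + fsum n (fun j => u j * u j) / 2).
  2:{ apply functional_extensionality; intro i.
      replace (fun j => (u i * u i + u j * u j) / 2) with (fun j => (u i * u i) / 2 + (u j * u j) * / 2)
        by (apply functional_extensionality; intro; field).
      rewrite fsum_plus, fsum_const, fsum_scal_r. field. }
  rewrite fsum_plus. replace (fun i => INR n * (u i * u i) / 2) with (fun i => (INR n / 2) * (u i * u i))
   by (apply functional_extensionality; intro; field).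
  rewrite fsum_scal, fsum_const. lra.
Qed.

Lemma near_id N (J : nat -> nat -> R) eps : 0 <= eps -> INR N * eps < 1 ->
  (forall i j, (i < N)%nat -> (j < N)%nat -> Rabs (J i j + (if Nat.eqb i j then 1 else 0)) <= eps) ->
  nonsingular N J /\ linearly_stable N J.
Proof.
  intros He HNe HJ. set (E := fun i j => J i j + (if Nat.eqb i j then 1 else 0)).
  assert (HEv : forall v i, (i < N)%nat -> fsum N (fun j => E i j * v j) = fsum N (fun j => J i j * v j) + v i).
  { intros v i Hi. unfold E. rewrite <- (fsum_kron N i v Hi), <- fsum_plus. apply fsum_ext; intros; ring. }
  assert (HEb : forall v i, (i < N)%nat -> Rabs (fsum N (fun j => E i j * v j)) <= eps * fsum N (fun j => Rabs (v j))).
  { intros v i Hi. eapply Rle_trans. apply fsum_abs. rewrite <- fsum_scal. apply fsum_le; intros j Hj.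
    rewrite Rabs_mult. apply Rmult_le_compat_r. apply Rabs_pos. apply HJ; auto. }
  split.
  - intros v Hv.
    assert (Hvi : forall i, (i < N)%nat -> Rabs (v i) <= eps * fsum N (fun j => Rabs (v j))).
    { intros i Hi. specialize (HEv v i Hi). rewrite Hv in HEv by auto. rewrite Rplus_0_l in HEv.
      rewrite <- HEv. apply HEb; auto. }
    set (S := fsum N (fun j => Rabs (v j))).
    assert (HS : S <= INR N * (eps * S)).
    { unfold S at 1. rewrite <- fsum_const. apply fsum_le; auto. }
    assert (0 <= S) by (apply fsum_nonneg; intros; apply Rabs_pos).
    assert (S = 0) by nra.
    intros i Hi. pose proof (fsum_all0 N (fun j => Rabs (v j)) ltac:(intros; apply Rabs_pos) H0 i Hi).
    simpl in H1. destruct (Req_dec (v i) 0); auto. exfalso. pose proof (Rabs_pos_lt _ H2). lra.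
  - intros a b [u [w [[k [Hk Hnz]] He2]]].
    assert (Hu : forall i, (i < N)%nat -> fsum N (fun j => E i j * u j) = (a + 1) * u i - b * w i).
    { intros i Hi. rewrite HEv by auto. destruct (He2 i Hi) as [H1 _]. rewrite H1. ring. }
    assert (Hw : forall i, (i < N)%nat -> fsum N (fun j => E i j * w j) = b * u i + (a + 1) * w i).
    { intros i Hi. rewrite HEv by auto. destruct (He2 i Hi) as [_ H1]. rewrite H1. ring. }
    set (P := fsum N (fun i => u i * u i + w i * w i)).
    assert (HP : 0 < P).
    { unfold P. assert (0 < u k * u k + w k * w k) by (destruct Hnz as [Hn|Hn]; pose proof (Rsqr_pos_lt _ Hn); pose proof (Rle_0_sqr (u k)); pose proof (Rle_0_sqr (w k)); unfold Rsqr in *; lra).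
      eapply Rlt_le_trans. 2: apply (fsum_term_le N (fun i => u i * u i + w i * w i) k); auto. exact H.
      intros; nra. }
    assert (Hid : fsum N (fun i => u i * fsum N (fun j => E i j * u j) + w i * fsum N (fun j => E i j * w j)) = (a + 1) * P).
    { unfold P. rewrite <- fsum_scal. apply fsum_ext; intros i Hi. rewrite Hu, Hw by auto. ring. }
    assert (Hb : fsum N (fun i => u i * fsum N (fun j => E i j * u j) + w i * fsum N (fun j => E i j * w j))
               <= eps * (INR N * P)).
    { eapply Rle_trans with (eps * (fsum N (fun i => fsum N (fun j => Rabs (u i) * Rabs (u j))) +
                                   fsum N (fun i => fsum N (fun j => Rabs (w i) * Rabs (w j))))).
      - rewrite <- fsum_plus, <- fsum_scal. apply fsum_le; intros i Hi.
        rewrite <- fsum_plus, <- fsum_scal.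
        rewrite <- !fsum_scal. rewrite <- fsum_plus. apply fsum_le; intros j Hj.
        pose proof (HJ i j Hi Hj) as Hij. change (Rabs (E i j) <= eps) in Hij.
        assert (u i * (E i j * u j) <= eps * (Rabs (u i) * Rabs (u j))).
        { eapply Rle_trans. apply Rle_abs. rewrite !Rabs_mult.
          pose proof (Rabs_pos (u i)); pose proof (Rabs_pos (u j)).
          assert (Hp : 0 <= Rabs (u i) * Rabs (u j)) by nra.
          pose proof (Rmult_le_compat_r _ _ _ Hp Hij). nra. }
        assert (w i * (E i j * w j) <= eps * (Rabs (w i) * Rabs (w j))).
        { eapply Rle_trans. apply Rle_abs. rewrite !Rabs_mult.
          pose proof (Rabs_pos (w i)); pose proof (Rabs_pos (w j)).
          assert (Hp : 0 <= Rabs (w i) * Rabs (w j)) by nra.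
          pose proof (Rmult_le_compat_r _ _ _ Hp Hij). nra. }
        lra.
      - pose proof (double_abs_bound N u). pose proof (double_abs_bound N w).
        unfold P. rewrite fsum_plus. nra. }
    rewrite Hid in Hb. nra.
Qed.

Definition Qf N (S : nat -> nat -> R) (v : nat -> R) := fsum N (fun i => v i * fsum N (fun j => S i j * v j)).
Definition Wf N (d : nat -> R) (v : nat -> R) := fsum N (fun i => v i * v i / d i).
Definition Bq N (S : nat -> nat -> R) (l h : nat -> R) := fsum N (fun i => h i * fsum N (fun j => S i j * l j)).
Definition Bw N (d : nat -> R) (l h : nat -> R) := fsum N (fun i => l i * h i / d i).

Lemma Qf_scal N S v c : Qf N S (fun i => c * v i) = c * c * Qf N S v.
Proof. unfold Qf. rewrite <- fsum_scal. apply fsum_ext; intros i _.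
 replace (fun j => S i j * (c * v j)) with (fun j => c * (S i j * v j)) by (apply functional_extensionality; intro; ring).
 rewrite fsum_scal. ring. Qed.
Lemma Wf_scal N d v c : Wf N d (fun i => c * v i) = c * c * Wf N d v.
Proof. unfold Wf. rewrite <- fsum_scal. apply fsum_ext; intros i _. unfold Rdiv. ring. Qed.

Lemma Bq_sym N S l h : (forall i j, (i < N)%nat -> (j < N)%nat -> S i j = S j i) -> Bq N S l h = Bq N S h l.
Proof. intros Hs. unfold Bq.
 transitivity (fsum N (fun i => fsum N (fun j => h i * S i j * l j))).
 { apply fsum_ext; intros i _. rewrite <- fsum_scal. apply fsum_ext; intros; ring. }
 rewrite fsum_swap.
 apply fsum_ext; intros j Hj. rewrite <- fsum_scal. apply fsum_ext; intros i Hi. rewrite Hs by auto. ring. Qed.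

Lemma Qf_expand N S l h t : (forall i j, (i < N)%nat -> (j < N)%nat -> S i j = S j i) ->
  Qf N S (fun i => l i + t * h i) = Qf N S l + 2 * t * Bq N S l h + t * t * Qf N S h.
Proof. intros Hs.
 assert (E : Qf N S (fun i => l i + t * h i) = Qf N S l + t * Bq N S l h + t * Bq N S h l + t * t * Qf N S h).
 { unfold Qf, Bq. rewrite <- !fsum_scal, <- !fsum_plus. apply fsum_ext; intros i _.
   replace (fun j => S i j * (l j + t * h j)) with (fun j => S i j * l j + t * (S i j * h j))
     by (apply functional_extensionality; intro; ring).
   rewrite fsum_plus, fsum_scal. ring. }
 rewrite E, (Bq_sym N S h l Hs). ring. Qed.

Lemma Wf_expand N d l h t :
  Wf N d (fun i => l i + t * h i) = Wf N d l + 2 * t * Bw N d l h + t * t * Wf N d h.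
Proof. unfold Wf, Bw. rewrite <- !fsum_scal, <- !fsum_plus. apply fsum_ext; intros i _. unfold Rdiv. ring. Qed.

Lemma Wf_nonneg N d v : (forall i, (i < N)%nat -> 0 < d i) -> 0 <= Wf N d v.
Proof. intros Hd. apply fsum_nonneg; intros i Hi. specialize (Hd i Hi). apply Rmult_le_pos. nra. left; apply Rinv_0_lt_compat; auto. Qed.

Lemma Wf_zero N d v : (forall i, (i < N)%nat -> 0 < d i) -> Wf N d v = 0 -> forall i, (i < N)%nat -> v i = 0.
Proof. intros Hd HW i Hi. pose proof (fsum_all0 N (fun i => v i * v i / d i)) as H.
 assert (v i * v i / d i = 0). { apply H; auto. intros j Hj. specialize (Hd j Hj). apply Rmult_le_pos. nra. left; apply Rinv_0_lt_compat; auto. }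
 specialize (Hd i Hi). unfold Rdiv in H0. apply Rmult_integral in H0. destruct H0. nra. exfalso. pose proof (Rinv_0_lt_compat _ Hd). lra. Qed.

Lemma Qf_cv N S (s : nat -> nat -> R) l : (forall i, (i < N)%nat -> Un_cv (fun k => s k i) (l i)) ->
  Un_cv (fun k => Qf N S (s k)) (Qf N S l).
Proof. intros H. unfold Qf. apply fsum_cv. intros i Hi. apply CV_mult. auto.
 apply (fsum_cv N (fun k j => S i j * s k j)). intros j Hj. apply CV_mult. apply cv_const. auto. Qed.

Lemma Wf_cv N d (s : nat -> nat -> R) l : (forall i, (i < N)%nat -> Un_cv (fun k => s k i) (l i)) ->
  Un_cv (fun k => Wf N d (s k)) (Wf N d l).
Proof. intros H. unfold Wf. apply (fsum_cv N (fun k i => s k i * s k i / d i)). intros i Hi.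
 unfold Rdiv. apply CV_mult. apply CV_mult; auto. apply cv_const. Qed.

Lemma spectral_pos N (d : nat -> R) (S J : nat -> nat -> R) :
  (forall i, (i < N)%nat -> 0 < d i) ->
  (forall i j, (i < N)%nat -> (j < N)%nat -> S i j = S j i) ->
  (forall i j, (i < N)%nat -> (j < N)%nat -> J i j = d i * S i j) ->
  (exists v, 0 < Qf N S v) ->
  exists u mu, 0 < mu /\ (exists i, (i < N)%nat /\ u i <> 0) /\
    forall i, (i < N)%nat -> fsum N (fun j => J i j * u j) = mu * u i.
Proof.
  intros Hd Hs HJ [v0 Hv0].
  assert (Hnorm : forall v, 0 < Wf N d v -> Wf N d (fun i => / sqrt (Wf N d v) * v i) = 1 /\
            Qf N S (fun i => / sqrt (Wf N d v) * v i) = Qf N S v / Wf N d v).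
  { intros v Hv. rewrite Wf_scal, Qf_scal.
    assert (E : / sqrt (Wf N d v) * / sqrt (Wf N d v) = / Wf N d v).
    { rewrite <- Rinv_mult. rewrite sqrt_sqrt; lra. }
    rewrite E. split; field; lra. }
  assert (HW0 : 0 < Wf N d v0).
  { destruct (Wf_nonneg N d v0 Hd); auto. exfalso.
    assert (Qf N S v0 = 0). { unfold Qf. apply fsum_zero. intros i Hi. rewrite (Wf_zero N d v0 Hd (eq_sym H) i Hi). ring. }
    lra. }
  set (Bd := 1 + fsum N d).
  assert (HB : forall v, Wf N d v = 1 -> forall i, (i < N)%nat -> Rabs (v i) <= Bd).
  { intros v Hv i Hi.
    assert (v i * v i / d i <= 1).
    { rewrite <- Hv. apply (fsum_term_le N (fun i => v i * v i / d i)); auto. intros j Hj. specialize (Hd j Hj).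
      apply Rmult_le_pos. nra. left; apply Rinv_0_lt_compat; auto. }
    assert (v i * v i <= d i).
    { specialize (Hd i Hi). apply Rmult_le_reg_r with (/ d i). apply Rinv_0_lt_compat; auto.
      rewrite Rinv_r by lra. exact H. }
    assert (d i <= fsum N d). { apply fsum_term_le; auto. intros j Hj; left; auto. }
    unfold Bd. assert (Rabs (v i) <= 1 + v i * v i).
    { unfold Rabs; destruct (Rcase_abs (v i)); nra. }
    lra. }
  set (Qm := fsum N (fun i => Bd * fsum N (fun j => Rabs (S i j) * Bd))).
  assert (HQm : forall v, Wf N d v = 1 -> Qf N S v <= Qm).
  { intros v Hv. eapply Rle_trans. apply Rle_abs. eapply Rle_trans. apply fsum_abs. apply fsum_le; intros i Hi.
    rewrite Rabs_mult. apply Rmult_le_compat. apply Rabs_pos. apply Rabs_pos. apply HB; auto.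
    eapply Rle_trans. apply fsum_abs. apply fsum_le; intros j Hj. rewrite Rabs_mult.
    apply Rmult_le_compat_l. apply Rabs_pos. apply HB; auto. }
  set (E := fun r => exists v, Wf N d v = 1 /\ r = Qf N S v).
  destruct (completeness E) as [mu [Hub Hlub]].
  { exists Qm. intros r [v [Hv ->]]. auto. }
  { exists (Qf N S (fun i => / sqrt (Wf N d v0) * v0 i)). exists (fun i => / sqrt (Wf N d v0) * v0 i).
    split; auto. apply Hnorm; auto. }
  assert (Hmu : 0 < mu).
  { destruct (Hnorm v0 HW0) as [H1 H2]. assert (Hin := Hub _ (ex_intro _ _ (conj H1 eq_refl))).
    rewrite H2 in Hin. assert (0 < Qf N S v0 / Wf N d v0) by (apply Rdiv_lt_0_compat; auto). lra. }
  assert (HPSD : forall v, Qf N S v <= mu * Wf N d v).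
  { intros v. destruct (Wf_nonneg N d v Hd) as [Hp|Hz].
    - destruct (Hnorm v Hp) as [H1 H2]. assert (Hin := Hub _ (ex_intro _ _ (conj H1 eq_refl))).
      rewrite H2 in Hin. apply Rmult_le_reg_r with (/ Wf N d v). apply Rinv_0_lt_compat; auto.
      replace (mu * Wf N d v * / Wf N d v) with mu by (field; lra). exact Hin.
    - assert (Qf N S v = 0). { unfold Qf. apply fsum_zero. intros i Hi. rewrite (Wf_zero N d v Hd (eq_sym Hz) i Hi). ring. }
      rewrite <- Hz. lra. }
  assert (Hseq : forall n : nat, exists v, Wf N d v = 1 /\ mu - / (INR n + 1) < Qf N S v).
  { intros n. apply NNPP. intros Hn.
    assert (Hpos : 0 < / (INR n + 1)) by (apply Rinv_0_lt_compat; pose proof (pos_INR n); lra).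
    assert (mu <= mu - / (INR n + 1)).
    { apply Hlub. intros r [v [Hv ->]]. apply Rnot_lt_le. intro Hc. apply Hn. exists v; auto. }
    lra. }
  set (s := fun n => proj1_sig (constructive_indefinite_description _ (Hseq n))).
  assert (Hs1 : forall n, Wf N d (s n) = 1 /\ mu - / (INR n + 1) < Qf N S (s n)).
  { intros n. unfold s. destruct (constructive_indefinite_description _ (Hseq n)); auto. }
  destruct (bwN N s Bd) as [phi [Hphi [l Hl]]].
  { intros k i Hi. apply HB; auto. apply Hs1. }
  assert (HWl : Wf N d l = 1).
  { apply (UL_sequence (fun k => Wf N d (s (phi k)))). apply Wf_cv; auto.
    intros e He; exists 0%nat; intros n _. unfold R_dist. rewrite (proj1 (Hs1 (phi n))). rewrite Rminus_diag, Rabs_R0; lra. }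
  assert (HQl : Qf N S l = mu).
  { apply Rle_antisym. apply Hub. exists l; auto.
    apply Rnot_lt_le. intro Hlt.
    set (e := (mu - Qf N S l) / 2).
    assert (He : 0 < e) by (unfold e; lra).
    destruct (Qf_cv N S (fun k => s (phi k)) l Hl e He) as [K1 HK1].
    destruct (archimed_cor1 e He) as [K2 [HK2 HK2']].
    set (k := (K1 + K2)%nat).
    specialize (HK1 k ltac:(unfold k; lia)). unfold R_dist in HK1.
    destruct (Hs1 (phi k)) as [_ Hq].
    assert (/ (INR (phi k) + 1) < e).
    { eapply Rle_lt_trans; [|exact HK2]. apply Rinv_le_contravar. apply lt_0_INR; lia.
      pose proof (incr_ge phi Hphi k) as Hk. apply le_INR in Hk. assert (INR K2 <= INR k) by (apply le_INR; unfold k; lia). lra. }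
    apply Rabs_def2 in HK1. unfold e in *. lra. }
  assert (HBl : forall h, mu * Bw N d l h - Bq N S l h = 0).
  { intros h. set (c := mu * Bw N d l h - Bq N S l h). set (F := mu * Wf N d h - Qf N S h).
    assert (HF : 0 <= F) by (unfold F; pose proof (HPSD h); lra).
    assert (Ht : forall t, 0 <= 2 * t * c + t * t * F).
    { intros t. pose proof (HPSD (fun i => l i + t * h i)). rewrite Qf_expand, Wf_expand in H by auto.
      unfold c, F. rewrite HWl, HQl in H. nra. }
    apply NNPP; intro Hc. specialize (Ht (- c / (F + 1))).
    assert (0 < c * c) by (apply Rsqr_pos_lt in Hc; unfold Rsqr in Hc; auto).
    replace (2 * (- c / (F + 1)) * c + - c / (F + 1) * (- c / (F + 1)) * F) with
      (c * c * (- F - 2) / ((F + 1) * (F + 1))) in Ht by (field; lra).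
    assert (0 < (F + 1) * (F + 1)) by nra.
    assert (c * c * (- F - 2) / ((F + 1) * (F + 1)) < 0).
    { apply Rdiv_neg_pos; auto. nra. }
    lra. }
  exists l, mu. split; auto. split.
  - apply NNPP; intro Hn. assert (Wf N d l = 0).
    { unfold Wf. apply fsum_zero. intros i Hi. destruct (Req_dec (l i) 0) as [E0|E0]. rewrite E0. unfold Rdiv. ring. exfalso. apply Hn; eauto. }
    lra.
  - intros k Hk. specialize (HBl (fun i => if Nat.eqb i k then 1 else 0)).
    assert (E1 : Bw N d l (fun i => if Nat.eqb i k then 1 else 0) = l k / d k).
    { unfold Bw. rewrite <- (fsum_delta N k (l k / d k) Hk). apply fsum_ext; intros i _.
      destruct (Nat.eqb_spec i k); subst; unfold Rdiv; ring. }
    assert (E2 : Bq N S l (fun i => if Nat.eqb i k then 1 else 0) = fsum N (fun j => S k j * l j)).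
    { unfold Bq. rewrite <- (fsum_delta N k (fsum N (fun j => S k j * l j)) Hk). apply fsum_ext; intros i _.
      destruct (Nat.eqb_spec i k); subst; ring. }
    rewrite E1, E2 in HBl.
    transitivity (d k * fsum N (fun j => S k j * l j)).
    { rewrite <- fsum_scal. apply fsum_ext; intros j Hj. rewrite HJ by auto. ring. }
    specialize (Hd k Hk). replace (fsum N (fun j => S k j * l j)) with (mu * (l k / d k)) by lra. field. lra.
Qed.

Definition sgm (z : R) := 1 / (1 + exp (- z)).

Lemma BR_sig N pot lam x i : 0 < lam -> BR N pot lam x i = sgm (dU N pot i x / lam).
Proof. intros Hl. unfold BR, sgm, dU.
 set (A := Uext N pot (upd x i 1)). set (B := Uext N pot (upd x i 0)).
 replace (- ((A - B) / lam)) with (B / lam + - (A / lam)) by (field; lra).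
 rewrite exp_plus, exp_Ropp. pose proof (exp_pos (A / lam)). pose proof (exp_pos (B / lam)). field. split; lra. Qed.

Lemma exp_sq z : 0 <= z -> z * z / 4 <= exp z.
Proof. intros Hz. replace z with (z / 2 + z / 2) at 3 by field. rewrite exp_plus.
 assert (z / 2 <= exp (z / 2)).
 { destruct (Req_dec z 0). subst. replace (0/2) with 0 by field. rewrite exp_0. lra.
   pose proof (exp_ineq1 (z / 2) ltac:(lra)). lra. }
 assert (0 <= z / 2) by lra. nra. Qed.

Lemma exp_gt z : 0 < z -> z < exp z.
Proof. intros. pose proof (exp_ineq1 z ltac:(lra)). lra. Qed.

Lemma sig_hi z : 0 < z -> 1 - sgm z <= 1 / z.
Proof. intros Hz. unfold sgm. pose proof (exp_pos (- z)). pose proof (exp_gt z Hz).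
 assert (E : 1 - 1 / (1 + exp (- z)) = 1 / (1 + exp z)).
 { rewrite exp_Ropp. pose proof (exp_pos z). field. split; lra. }
 rewrite E. apply Rmult_le_compat_l. lra. apply Rinv_le_contravar; lra. Qed.

Lemma sig_lo z : z < 0 -> sgm z <= 1 / (- z).
Proof. intros Hz. unfold sgm. pose proof (exp_gt (- z) ltac:(lra)).
 apply Rmult_le_compat_l. lra. apply Rinv_le_contravar; lra. Qed.

Lemma sig_bounds z : 0 < sgm z < 1.
Proof. unfold sgm. pose proof (exp_pos (- z)). split. apply Rdiv_lt_0_compat; lra.
 apply Rmult_lt_reg_r with (1 + exp (- z)). lra. unfold Rdiv. rewrite Rmult_assoc, Rinv_l by lra. lra. Qed.

Lemma sig_prod z : z <> 0 -> sgm z * (1 - sgm z) <= 4 / (z * z).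
Proof. intros Hz. pose proof (sig_bounds z).
 assert (Hzz : 0 < z * z) by (pose proof (Rsqr_pos_lt z Hz); unfold Rsqr in *; lra).
 destruct (Rlt_or_le 0 z).
 - assert (1 - sgm z <= 4 / (z * z)).
   { unfold sgm. rewrite exp_Ropp. pose proof (exp_pos z). pose proof (exp_sq z ltac:(lra)).
     replace (1 - 1 / (1 + / exp z)) with (1 / (1 + exp z)) by (field; split; lra).
     apply Rle_trans with (1 / exp z). apply Rmult_le_compat_l. lra. apply Rinv_le_contravar; lra.
     unfold Rdiv. rewrite !Rmult_1_l. replace (4 * / (z * z)) with (/ (z * z / 4)) by (field; lra).
     apply Rinv_le_contravar. lra. lra. }
   nra.
 - assert (sgm z <= 4 / (z * z)).
   { unfold sgm. pose proof (exp_pos (- z)). pose proof (exp_sq (- z) ltac:(lra)).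
     apply Rle_trans with (1 / exp (- z)). apply Rmult_le_compat_l. lra. apply Rinv_le_contravar; lra.
     unfold Rdiv. rewrite !Rmult_1_l. replace (4 * / (z * z)) with (/ (- z * - z / 4)) by (field; lra).
     apply Rinv_le_contravar. nra. lra. }
   nra.
Qed.

Lemma ND_bounds N pot lam x i : is_ND N pot lam x -> (i < N)%nat -> 0 < x i < 1.
Proof. intros [_ H] Hi. rewrite (H i Hi). apply BR_bounds. Qed.

Lemma d1_upd n x y i t : d1 n (upd x i t) (upd y i t) <= d1 n x y.
Proof. unfold d1. apply fsum_le; intros j _. unfold upd. destruct (Nat.eqb j i).
 rewrite Rminus_diag, Rabs_R0. apply Rabs_pos. lra. Qed.

Lemma in_Delta_upd n x i t : in_Delta n x -> 0 <= t <= 1 -> in_Delta n (upd x i t).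
Proof. intros H Ht j Hj. unfold upd. destruct (Nat.eqb j i); auto. Qed.

Lemma lip_dU N pot : exists L, 0 < L /\ forall i y z, (i < N)%nat -> in_Delta N y -> in_Delta N z ->
  Rabs (dU N pot i y - dU N pot i z) <= L * d1 N y z.
Proof.
  destruct (mlext_lip N pot) as [L0 [HL0 H]]. exists (2 * L0 + 1). split; [lra|].
  intros i y z Hi Hy Hz. unfold dU, Uext.
  assert (0 <= d1 N y z) by (apply fsum_nonneg; intros; apply Rabs_pos).
  pose proof (H (upd y i 1) (upd z i 1) ltac:(apply in_Delta_upd; auto; lra) ltac:(apply in_Delta_upd; auto; lra)).
  pose proof (H (upd y i 0) (upd z i 0) ltac:(apply in_Delta_upd; auto; lra) ltac:(apply in_Delta_upd; auto; lra)).
  pose proof (d1_upd N y z i 1). pose proof (d1_upd N y z i 0).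
  replace (mlext N pot (upd y i 1) - mlext N pot (upd y i 0) - (mlext N pot (upd z i 1) - mlext N pot (upd z i 0)))
    with ((mlext N pot (upd y i 1) - mlext N pot (upd z i 1)) - (mlext N pot (upd y i 0) - mlext N pot (upd z i 0))) by ring.
  unfold Rminus at 1. eapply Rle_trans. apply Rabs_triang. rewrite Rabs_Ropp.
  assert (L0 * d1 N (upd y i 1) (upd z i 1) <= L0 * d1 N y z) by (apply Rmult_le_compat_l; auto).
  assert (L0 * d1 N (upd y i 0) (upd z i 0) <= L0 * d1 N y z) by (apply Rmult_le_compat_l; auto).
  lra.
Qed.

Lemma bound_G N pot : exists Bg, 0 <= Bg /\ forall i j y, in_Delta N y -> Rabs (G N pot i j y) <= Bg.
Proof.
  destruct (mlext_bound N pot) as [M HM]. exists (4 * M).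
  assert (0 <= M). { eapply Rle_trans. apply Rabs_pos. apply (HM (fun _ => 0)). intros i _; lra. }
  split; [lra|]. intros i j y Hy. unfold G, dU, Uext.
  assert (HD : forall a b, 0 <= a <= 1 -> 0 <= b <= 1 -> Rabs (mlext N pot (upd (upd y j a) i b)) <= M).
  { intros a b Ha Hb. apply HM. apply in_Delta_upd; auto. apply in_Delta_upd; auto. }
  pose proof (HD 1 1 ltac:(lra) ltac:(lra)). pose proof (HD 1 0 ltac:(lra) ltac:(lra)).
  pose proof (HD 0 1 ltac:(lra) ltac:(lra)). pose proof (HD 0 0 ltac:(lra) ltac:(lra)).
  revert H0 H1 H2 H3. generalize (mlext N pot (upd (upd y j 1) i 1)), (mlext N pot (upd (upd y j 1) i 0)),
    (mlext N pot (upd (upd y j 0) i 1)), (mlext N pot (upd (upd y j 0) i 0)). intros a b c d Ha Hb Hc Hd.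
  unfold Rabs in *. repeat destruct Rcase_abs; lra.
Qed.

Lemma c_pure N pot : exists c, 0 < c /\ forall p i, is_pure N p -> (i < N)%nat -> dU N pot i p <> 0 -> c <= Rabs (dU N pot i p).
Proof.
  destruct (mlext_pure_vals N pot) as [l Hl].
  destruct (list_min_pos (flat_map (fun a => map (fun b => a - b) l) l)) as [c [Hc H]].
  exists c. split; auto. intros p i Hp Hi Hn. apply H; auto. unfold dU.
  apply in_flat_map. exists (Uext N pot (upd p i 1)). split. apply Hl. intros j Hj. unfold upd. destruct (Nat.eqb j i); auto.
  apply (in_map (fun b => Uext N pot (upd p i 1) - b)). apply Hl. intros j Hj. unfold upd. destruct (Nat.eqb j i); auto.
Qed.

Definition pureNE N pot p := is_NE N pot p /\ is_pure N p.

Lemma fsum_unif N (g : nat -> R -> R) (a : nat -> R) (P : R -> Prop) x0 :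
  (forall i, (i < N)%nat -> forall eps, 0 < eps -> exists alp, 0 < alp /\ forall l, P l -> Rabs (l - x0) < alp -> Rabs (g i l - a i) < eps) ->
  forall eps, 0 < eps -> exists alp, 0 < alp /\ forall l, P l -> Rabs (l - x0) < alp -> fsum N (fun i => Rabs (g i l - a i)) < eps.
Proof.
  induction N; intros H eps He.
  - exists 1. split; [lra|]. intros; simpl; lra.
  - destruct (IHN ltac:(intros i Hi; apply H; lia) (eps / 2) ltac:(lra)) as [a1 [Ha1 H1]].
    destruct (H N ltac:(lia) (eps / 2) ltac:(lra)) as [a2 [Ha2 H2]].
    exists (Rmin a1 a2). split. apply Rmin_pos; auto. intros l Pl Hl. simpl.
    assert (Rabs (l - x0) < a1) by (eapply Rlt_le_trans; [exact Hl|apply Rmin_l]).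
    assert (Rabs (l - x0) < a2) by (eapply Rlt_le_trans; [exact Hl|apply Rmin_r]).
    specialize (H1 l Pl H0). specialize (H2 l Pl H3). lra.
Qed.

Lemma d1_close N x y p : Rabs (d1 N x p - d1 N y p) <= fsum N (fun i => Rabs (x i - y i)).
Proof. unfold d1. rewrite <- fsum_minus. eapply Rle_trans. apply fsum_abs. apply fsum_le; intros i _.
 replace (x i - y i) with ((x i - p i) - (y i - p i)) by ring. apply Rabs_triang_inv2. Qed.

Lemma bf_cont N pot lam1 branch xs p : is_branch_system N pot lam1 branch -> is_NE N pot xs ->
  forall l0, 0 < l0 < lam1 -> continuity_pt (fun l => d1 N (branch xs l) p) l0.
Proof.
  intros [H0 [Hb _]] Hxs l0 Hl0. destruct (Hb xs Hxs) as [_ Hc].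
  unfold continuity_pt, continue_in, limit1_in, limit_in, D_x, no_cond. simpl. unfold R_dist.
  intros eps He.
  assert (HU : forall i, (i < N)%nat -> forall e, 0 < e -> exists alp, 0 < alp /\ forall l, 0 < l < lam1 -> Rabs (l - l0) < alp -> Rabs (branch xs l i - branch xs l0 i) < e).
  { intros i Hi e He'. destruct (Hc i Hi) as [Hci _]. specialize (Hci l0 Hl0).
    unfold limit1_in, limit_in in Hci. simpl in Hci. unfold R_dist in Hci.
    destruct (Hci e He') as [al [Hal Hal2]]. exists al. split; auto. }
  destruct (fsum_unif N (fun i l => branch xs l i) (fun i => branch xs l0 i) (fun l => 0 < l < lam1) l0 HU eps He) as [a [Ha Ha2]].
  exists (Rmin a (Rmin l0 (lam1 - l0))). split. apply Rmin_pos; auto. apply Rmin_pos; lra.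
  intros x [_ Hx]. assert (Rabs (x - l0) < a) by (eapply Rlt_le_trans; [exact Hx|apply Rmin_l]).
  assert (Rabs (x - l0) < Rmin l0 (lam1 - l0)) by (eapply Rlt_le_trans; [exact Hx|apply Rmin_r]).
  assert (Rabs (x - l0) < l0) by (eapply Rlt_le_trans; [exact H1|apply Rmin_l]).
  assert (Rabs (x - l0) < lam1 - l0) by (eapply Rlt_le_trans; [exact H1|apply Rmin_r]).
  assert (0 < x < lam1) by (unfold Rabs in *; destruct Rcase_abs; lra).
  eapply Rle_lt_trans. apply d1_close. apply Ha2; auto.
Qed.

Lemma bf_lim0 N pot lam1 branch xs p : is_branch_system N pot lam1 branch -> is_NE N pot xs ->
  forall eps, 0 < eps -> exists alp, 0 < alp /\ forall l, 0 < l < lam1 -> l < alp ->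
    Rabs (d1 N (branch xs l) p - d1 N xs p) < eps.
Proof.
  intros [H0 [Hb _]] Hxs eps He. destruct (Hb xs Hxs) as [_ Hc].
  assert (HU : forall i, (i < N)%nat -> forall e, 0 < e -> exists alp, 0 < alp /\ forall l, 0 < l < lam1 -> Rabs (l - 0) < alp -> Rabs (branch xs l i - xs i) < e).
  { intros i Hi e He'. destruct (Hc i Hi) as [_ Hci].
    unfold limit1_in, limit_in in Hci. simpl in Hci. unfold R_dist in Hci.
    destruct (Hci e He') as [al [Hal Hal2]]. exists al. split; auto. }
  destruct (fsum_unif N (fun i l => branch xs l i) (fun i => xs i) (fun l => 0 < l < lam1) 0 HU eps He) as [a [Ha Ha2]].
  exists a. split; auto. intros l Hl Hla. eapply Rle_lt_trans. apply d1_close. apply Ha2; auto.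
  rewrite Rminus_0_r, Rabs_right; lra.
Qed.

Lemma cont_sub_l F c x : continuity_pt F x -> continuity_pt (fun l => c - F l) x.
Proof. unfold continuity_pt, continue_in, limit1_in, limit_in. simpl. unfold R_dist. intros H e He.
 destruct (H e He) as [a [Ha H2]]. exists a. split; auto. intros y Hy. specialize (H2 y Hy).
 replace (c - F y - (c - F x)) with (- (F y - F x)) by ring. rewrite Rabs_Ropp; auto. Qed.
Lemma cont_sub_r F c x : continuity_pt F x -> continuity_pt (fun l => F l - c) x.
Proof. unfold continuity_pt, continue_in, limit1_in, limit_in. simpl. unfold R_dist. intros H e He.
 destruct (H e He) as [a [Ha H2]]. exists a. split; auto. intros y Hy. specialize (H2 y Hy).
 replace (F y - c - (F x - c)) with (F y - F x) by ring. auto. Qed.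

Lemma d1_veq N x y p : veq N x y -> d1 N x p = d1 N y p.
Proof. intros H. unfold d1. apply fsum_ext. intros i Hi. rewrite H; auto. Qed.

Lemma d1_self N x : d1 N x x = 0.
Proof. unfold d1. apply fsum_zero. intros. rewrite Rminus_diag, Rabs_R0; auto. Qed.

Lemma stay_near N pot lam1 branch delta lamg : is_branch_system N pot lam1 branch -> 0 < delta ->
  (forall lam, 0 < lam < lamg -> forall y, is_ND N pot lam y -> forall p, pureNE N pot p -> d1 N y p <= 2 * delta -> d1 N y p <= delta / 2) ->
  (forall ys p, is_NE N pot ys -> pureNE N pot p -> d1 N ys p <= 2 * delta -> veq N ys p) ->
  forall xs p lam, is_NE N pot xs -> pureNE N pot p -> 0 < lam < lam1 -> lam < lamg ->
  d1 N (branch xs lam) p <= delta / 2 -> veq N xs p.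
Proof.
  intros Hbr Hd Hgap Hnear xs p lam Hxs Hp Hl Hlg Hf.
  set (f := fun l => d1 N (branch xs l) p).
  assert (C : forall t, 0 < t <= lam -> f t <= 2 * delta).
  { intros t Ht. apply Rnot_lt_le. intro Hft.
    destruct (Rle_lt_or_eq_dec t lam (proj2 Ht)) as [Htl|Htl].
    2:{ subst t. unfold f in Hft. lra. }
    destruct (Ranalysis5.IVT_interv (fun l => delta - f l) t lam) as [z [Hz Hfz]]; auto.
    - intros a Ha. apply cont_sub_l. apply (bf_cont N pot lam1 branch xs p Hbr Hxs). lra.
    - lra.
    - unfold f in *. lra.
    - assert (f z = delta) by lra.
      destruct Hbr as [_ [Hb _]]. destruct (Hb xs Hxs) as [Hnd _].
      assert (f z <= delta / 2). { unfold f in *. apply (Hgap z ltac:(lra)); auto. apply Hnd; lra. lra. }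
      lra. }
  apply Hnear; auto. apply Rnot_lt_le. intro Hlt.
  destruct (bf_lim0 N pot lam1 branch xs p Hbr Hxs (d1 N xs p - 2 * delta) ltac:(lra)) as [a [Ha Ha2]].
  set (t := Rmin a lam / 2).
  assert (0 < Rmin a lam) by (apply Rmin_pos; lra).
  assert (Rmin a lam <= a) by apply Rmin_l. assert (Rmin a lam <= lam) by apply Rmin_r.
  specialize (Ha2 t ltac:(unfold t; lra) ltac:(unfold t; lra)). specialize (C t ltac:(unfold t; lra)).
  unfold f in C. apply Rabs_def2 in Ha2. lra.
Qed.

Lemma leave_far N pot lam1 branch delta lamg : is_branch_system N pot lam1 branch -> 0 < delta ->
  (forall lam, 0 < lam < lamg -> forall y, is_ND N pot lam y -> forall p, pureNE N pot p -> d1 N y p <= 2 * delta -> d1 N y p <= delta / 2) ->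
  forall xs lam, pureNE N pot xs -> 0 < lam < lam1 -> lam < lamg ->
  d1 N (branch xs lam) xs > 2 * delta -> False.
Proof.
  intros Hbr Hd Hgap xs lam Hxs Hl Hlg Hf.
  destruct (bf_lim0 N pot lam1 branch xs xs Hbr (proj1 Hxs) (delta / 2) ltac:(lra)) as [a [Ha Ha2]].
  rewrite d1_self in Ha2.
  set (t := Rmin a lam / 2).
  assert (0 < Rmin a lam) by (apply Rmin_pos; lra).
  assert (Rmin a lam <= a) by apply Rmin_l. assert (Rmin a lam <= lam) by apply Rmin_r.
  specialize (Ha2 t ltac:(unfold t; lra) ltac:(unfold t; lra)). rewrite Rminus_0_r in Ha2. apply Rabs_def2 in Ha2.
  destruct (Ranalysis5.IVT_interv (fun l => d1 N (branch xs l) xs - delta) t lam) as [z [Hz Hfz]].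
  - intros b Hb. apply cont_sub_r. apply (bf_cont N pot lam1 branch xs xs Hbr (proj1 Hxs)). unfold t in Hb. lra.
  - unfold t; lra.
  - lra.
  - lra.
  - destruct Hbr as [_ [Hb _]]. destruct (Hb xs (proj1 Hxs)) as [Hnd _].
    assert (z <= lam) by lra. assert (0 < z) by (unfold t in Hz; lra).
    assert (d1 N (branch xs z) xs <= delta / 2). { apply (Hgap z ltac:(lra)); auto. apply Hnd; lra. lra. }
    lra.
Qed.

Lemma NE_sign N pot x i : is_NE N pot x -> (i < N)%nat ->
  (0 < dU N pot i x -> x i = 1) /\ (dU N pot i x < 0 -> x i = 0).
Proof.
  intros [HD HNE] Hi. pose proof (HD i Hi).
  assert (E : forall t, Uext N pot (upd x i t) = t * Uext N pot (upd x i 1) + (1 - t) * Uext N pot (upd x i 0))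
    by (intros; apply U_affine; auto).
  assert (Ex : Uext N pot x = x i * Uext N pot (upd x i 1) + (1 - x i) * Uext N pot (upd x i 0))
    by (rewrite <- E, upd_id; auto).
  unfold dU. split; intros Hs.
  - pose proof (HNE i 1 Hi ltac:(lra)). rewrite E in H0. nra.
  - pose proof (HNE i 0 Hi ltac:(lra)). rewrite E in H0. nra.
Qed.

Lemma pure_part N pot lam1 branch : regular_potential_game N pot -> is_branch_system N pot lam1 branch ->
  exists delta lamP, 0 < delta /\ 0 < lamP /\ lamP <= lam1 /\
  forall lam, 0 < lam < lamP -> forall x, is_ND N pot lam x ->
   ((exists p, pureNE N pot p /\ d1 N x p <= 2 * delta) ->
      nonsingular N (Jf N pot lam x) /\ linearly_stable N (Jf N pot lam x) /\ pure_ND N pot branch lam x) /\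
   ((forall p, pureNE N pot p -> d1 N x p > 2 * delta) -> ~ pure_ND N pot branch lam x).
Proof.
  intros Hreg Hbr.
  destruct (c_pure N pot) as [c [Hc Hcp]]. destruct (lip_dU N pot) as [L [HL HLip]].
  destruct (bound_G N pot) as [Bg [HBg HG]].
  set (delta := c / (4 * L)).
  assert (Hdelta : 0 < delta) by (unfold delta; apply Rdiv_lt_0_compat; lra).
  assert (HLd : L * (2 * delta) = c / 2) by (unfold delta; field; lra).
  pose proof (pos_INR N) as HN.
  set (lamg := c * delta / (4 * (INR N + 1))).
  set (lams := c * c / (16 * (Bg + 1) * (INR N + 1))).
  assert (Hlamg : 0 < lamg) by (unfold lamg; apply Rdiv_lt_0_compat; nra).
  assert (Hlams : 0 < lams) by (unfold lams; apply Rdiv_lt_0_compat; nra).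
  assert (Hlam1 : 0 < lam1) by (destruct Hbr; auto).
  assert (Hsp : forall p i, pureNE N pot p -> (i < N)%nat -> (p i = 1 -> c <= dU N pot i p) /\ (p i = 0 -> dU N pot i p <= - c)).
  { intros p i [HpNE Hpp] Hi. destruct (Hreg p HpNE) as [Hqs _]. destruct (Hqs i Hi) as [Q1 Q0].
    split; intros Hpi.
    - specialize (Q1 Hpi). assert (0 < dU N pot i p) by (unfold dU; lra).
      pose proof (Hcp p i Hpp Hi ltac:(lra)). rewrite Rabs_right in H0; lra.
    - specialize (Q0 Hpi). assert (dU N pot i p < 0) by (unfold dU; lra).
      pose proof (Hcp p i Hpp Hi ltac:(lra)). rewrite Rabs_left in H0; lra. }
  assert (Hsy : forall p y i, pureNE N pot p -> in_Delta N y -> d1 N y p <= 2 * delta -> (i < N)%nat ->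
             (p i = 1 -> c / 2 <= dU N pot i y) /\ (p i = 0 -> dU N pot i y <= - (c / 2))).
  { intros p y i Hp Hy Hd Hi. pose proof (HLip i y p Hi Hy (proj1 (proj1 Hp))).
    assert (L * d1 N y p <= c / 2) by (rewrite <- HLd; apply Rmult_le_compat_l; lra).
    destruct (Hsp p i Hp Hi) as [S1 S0]. assert (Hab : - (c/2) <= dU N pot i y - dU N pot i p <= c / 2) by (unfold Rabs in H; destruct Rcase_abs; lra). clear H. split; intros Hq; [specialize (S1 Hq)|specialize (S0 Hq)]; lra. }
  assert (Hnear : forall ys p, is_NE N pot ys -> pureNE N pot p -> d1 N ys p <= 2 * delta -> veq N ys p).
  { intros ys p Hys Hp Hd i Hi. destruct (Hsy p ys i Hp (proj1 Hys) Hd Hi) as [S1 S0].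
    destruct (NE_sign N pot ys i Hys Hi) as [N1 N0].
    destruct (proj2 Hp i Hi) as [E|E]; rewrite E. apply N0. specialize (S0 E). lra. apply N1. specialize (S1 E). lra. }
  assert (Hcoord : forall lam x p i, 0 < lam -> is_ND N pot lam x -> pureNE N pot p -> d1 N x p <= 2 * delta -> (i < N)%nat ->
            Rabs (x i - p i) <= 2 * lam / c).
  { intros lam x p i Hl Hx Hp Hd Hi. destruct (Hsy p x i Hp (proj1 Hx) Hd Hi) as [S1 S0].
    rewrite (proj2 Hx i Hi), (BR_sig N pot lam x i Hl). pose proof (sig_bounds (dU N pot i x / lam)).
    destruct (proj2 Hp i Hi) as [E|E]; rewrite E.
    - specialize (S0 E). assert (Hz : dU N pot i x / lam < 0). { apply Rdiv_neg_pos; lra. }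
      pose proof (sig_lo _ Hz). rewrite Rminus_0_r, Rabs_right by lra.
      eapply Rle_trans. exact H0. replace (1 / - (dU N pot i x / lam)) with (lam / (- dU N pot i x)) by (field; lra).
      unfold Rdiv. replace (2 * lam * / c) with (lam * (2 * / c)) by ring. apply Rmult_le_compat_l. lra.
      replace (2 * / c) with (/ (c / 2)) by (field; lra). apply Rinv_le_contravar; lra.
    - specialize (S1 E). assert (Hz : 0 < dU N pot i x / lam). { apply Rdiv_lt_0_compat; lra. }
      pose proof (sig_hi _ Hz). rewrite Rabs_left1 by lra.
      replace (- (sgm (dU N pot i x / lam) - 1)) with (1 - sgm (dU N pot i x / lam)) by ring.
      eapply Rle_trans. exact H0. replace (1 / (dU N pot i x / lam)) with (lam / (dU N pot i x)) by (field; lra).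
      unfold Rdiv. replace (2 * lam * / c) with (lam * (2 * / c)) by ring. apply Rmult_le_compat_l. lra.
      replace (2 * / c) with (/ (c / 2)) by (field; lra). apply Rinv_le_contravar; lra. }
  assert (Hgap : forall lam, 0 < lam < lamg -> forall y, is_ND N pot lam y -> forall p, pureNE N pot p -> d1 N y p <= 2 * delta -> d1 N y p <= delta / 2).
  { intros lam Hl y Hy p Hp Hd. apply Rle_trans with (INR N * (2 * lam / c)).
    - unfold d1 at 1. rewrite <- fsum_const. apply fsum_le. intros i Hi. apply Hcoord; auto; lra.
    - unfold lamg in Hl. destruct Hl as [Hl0 Hl1].
      apply Rmult_lt_compat_r with (r := 4 * (INR N + 1)) in Hl1; [|lra].
      replace (c * delta / (4 * (INR N + 1)) * (4 * (INR N + 1))) with (c * delta) in Hl1 by (field; lra).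
      apply Rmult_le_reg_r with c; auto. replace (INR N * (2 * lam / c) * c) with (2 * (INR N * lam)) by (field; lra).
      nra. }
  exists delta, (Rmin lam1 (Rmin lamg lams)). split; auto. split. apply Rmin_pos; auto. apply Rmin_pos; auto.
  split. apply Rmin_l.
  intros lam Hl x Hx.
  assert (Hl1 : lam < lam1) by (eapply Rlt_le_trans; [apply Hl|apply Rmin_l]).
  assert (Hl2 : lam < Rmin lamg lams) by (eapply Rlt_le_trans; [apply Hl|apply Rmin_r]).
  assert (Hlg : lam < lamg) by (eapply Rlt_le_trans; [apply Hl2|apply Rmin_l]).
  assert (Hls : lam < lams) by (eapply Rlt_le_trans; [apply Hl2|apply Rmin_r]).
  destruct Hl as [Hl0 _].
  split.
  - intros [p [Hp Hd]].
    assert (Hd' : d1 N x p <= delta / 2) by (apply (Hgap lam); auto; lra).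
    assert (NS : nonsingular N (Jf N pot lam x) /\ linearly_stable N (Jf N pot lam x)).
    { apply (near_id N _ (16 * lam * Bg / (c * c))).
      * apply Rmult_le_pos. nra. left. apply Rinv_0_lt_compat. nra.
      * unfold lams in Hls. apply Rmult_lt_compat_r with (r := 16 * (Bg + 1) * (INR N + 1)) in Hls; [|nra].
        replace (c * c / (16 * (Bg + 1) * (INR N + 1)) * (16 * (Bg + 1) * (INR N + 1))) with (c * c) in Hls by (field; nra).
        apply Rmult_lt_reg_r with (c * c). nra. replace (INR N * (16 * lam * Bg / (c * c)) * (c * c)) with (16 * lam * Bg * INR N) by (field; lra).
        nra.
      * intros i j Hi Hj. unfold Jf. replace (x i * (1 - x i) * G N pot i j x / lam - (if Nat.eqb i j then 1 else 0) + (if Nat.eqb i j then 1 else 0))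
          with (x i * (1 - x i) * G N pot i j x / lam) by ring.
        destruct (Hsy p x i Hp (proj1 Hx) Hd Hi) as [S1 S0].
        assert (Hm : c / 2 <= Rabs (dU N pot i x)).
        { destruct (proj2 Hp i Hi) as [E|E]. specialize (S0 E). rewrite Rabs_left; lra. specialize (S1 E). rewrite Rabs_right; lra. }
        set (z := dU N pot i x / lam).
        assert (Hz : z <> 0). { unfold z. intro Hz. assert (dU N pot i x = 0) by (apply (Rmult_eq_compat_r lam) in Hz; unfold Rdiv in Hz; rewrite Rmult_assoc, Rinv_l in Hz; lra). rewrite H in Hm. rewrite Rabs_R0 in Hm. lra. }
        pose proof (sig_prod z Hz) as Hsp2.
        assert (Hxi : x i = sgm z) by (rewrite (proj2 Hx i Hi), BR_sig; auto).
        rewrite Hxi. pose proof (sig_bounds z).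
        assert (Hzz : c * c / (4 * (lam * lam)) <= z * z).
        { unfold z. replace (dU N pot i x / lam * (dU N pot i x / lam)) with (Rabs (dU N pot i x) * Rabs (dU N pot i x) / (lam * lam)).
          2:{ rewrite <- Rabs_mult. rewrite Rabs_right. field. lra. nra. }
          replace (c * c / (4 * (lam * lam))) with ((c / 2) * (c / 2) / (lam * lam)) by (field; lra).
          unfold Rdiv at 1 3. apply Rmult_le_compat_r. left. apply Rinv_0_lt_compat. nra.
          apply Rmult_le_compat; lra. }
        assert (H4 : 4 / (z * z) <= 16 * (lam * lam) / (c * c)).
        { replace (16 * (lam * lam) / (c * c)) with (4 / (c * c / (4 * (lam * lam)))) by (field; split; lra).
          unfold Rdiv. apply Rmult_le_compat_l. lra. apply Rinv_le_contravar; auto. apply Rdiv_lt_0_compat; nra. }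
        pose proof (HG i j x (proj1 Hx)).
        unfold Rdiv at 1. rewrite !Rabs_mult. rewrite (Rabs_right (/ lam)) by (left; apply Rinv_0_lt_compat; lra).
        rewrite (Rabs_right (sgm z)), (Rabs_right (1 - sgm z)) by lra.
        assert (sgm z * (1 - sgm z) <= 16 * (lam * lam) / (c * c)) by lra.
        assert (0 <= sgm z * (1 - sgm z)) by nra.
        pose proof (Rabs_pos (G N pot i j x)).
        apply Rle_trans with (16 * (lam * lam) / (c * c) * Bg * / lam).
        { apply Rmult_le_compat_r. left; apply Rinv_0_lt_compat; lra. apply Rmult_le_compat; auto. }
        right. field. lra. }
    split; [apply NS|split; [apply NS|]].
    destruct Hbr as [Hb0 [Hb1 Hb2]]. destruct (Hb2 lam ltac:(lra)) as [_ Hex].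
    destruct (Hex x Hx) as [ys [Hys Hv]]. exists ys.
    assert (Hvp : veq N ys p).
    { apply (stay_near N pot lam1 branch delta lamg (conj Hb0 (conj Hb1 Hb2)) Hdelta Hgap Hnear ys p lam Hys Hp); try lra.
      rewrite <- (d1_veq N x (branch ys lam) p Hv). auto. }
    split; auto. split; auto. intros i Hi. rewrite (Hvp i Hi). apply (proj2 Hp i Hi).
  - intros Hfar [xs [Hxs [Hxp Hv]]].
    apply (leave_far N pot lam1 branch delta lamg Hbr Hdelta Hgap xs lam (conj Hxs Hxp)); try lra.
    rewrite <- (d1_veq N x (branch xs lam) xs Hv). apply Hfar. split; auto.
Qed.

Lemma cv_upd N (s : nat -> nat -> R) l j t : (forall i, (i < N)%nat -> Un_cv (fun k => s k i) (l i)) ->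
  forall i, (i < N)%nat -> Un_cv (fun k => upd (s k) j t i) (upd l j t i).
Proof. intros H i Hi. unfold upd. destruct (Nat.eqb i j). apply cv_const. auto. Qed.

Lemma dU_cv N pot (s : nat -> nat -> R) l i : (forall i, (i < N)%nat -> Un_cv (fun k => s k i) (l i)) ->
  Un_cv (fun k => dU N pot i (s k)) (dU N pot i l).
Proof. intros H. unfold dU, Uext. apply CV_minus; apply mlext_cv; apply cv_upd; auto. Qed.

Lemma G_cv N pot (s : nat -> nat -> R) l i j : (forall i, (i < N)%nat -> Un_cv (fun k => s k i) (l i)) ->
  Un_cv (fun k => G N pot i j (s k)) (G N pot i j l).
Proof. intros H. unfold G. apply CV_minus; apply (dU_cv N pot (fun k => upd (s k) j _)); apply cv_upd; auto. Qed.

Lemma lim_le u l c : Un_cv u l -> (forall k, c <= u k) -> c <= l.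
Proof. intros H Hc. apply Rnot_lt_le. intro Hl. destruct (H (c - l) ltac:(lra)) as [K HK].
 specialize (HK K (le_n _)). specialize (Hc K). unfold R_dist in HK. apply Rabs_def2 in HK. lra. Qed.
Lemma lim_ge u l c : Un_cv u l -> (forall k, u k <= c) -> l <= c.
Proof. intros H Hc. apply Rnot_lt_le. intro Hl. destruct (H (l - c) ltac:(lra)) as [K HK].
 specialize (HK K (le_n _)). specialize (Hc K). unfold R_dist in HK. apply Rabs_def2 in HK. lra. Qed.

Lemma ev_pos u l : Un_cv u l -> 0 < l -> exists K, forall k, (K <= k)%nat -> l / 2 < u k.
Proof. intros H Hl. destruct (H (l / 2) ltac:(lra)) as [K HK]. exists K. intros k Hk.
 specialize (HK k Hk). unfold R_dist in HK. apply Rabs_def2 in HK. lra. Qed.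
Lemma ev_lt u l c : Un_cv u l -> l < c -> exists K, forall k, (K <= k)%nat -> u k < c.
Proof. intros H Hl. destruct (H (c - l) ltac:(lra)) as [K HK]. exists K. intros k Hk.
 specialize (HK k Hk). unfold R_dist in HK. apply Rabs_def2 in HK. lra. Qed.
Lemma ev_abs u l : Un_cv u l -> l <> 0 -> exists K, forall k, (K <= k)%nat -> Rabs l / 2 < Rabs (u k).
Proof. intros H Hl. pose proof (Rabs_pos_lt _ Hl). destruct (H (Rabs l / 2) ltac:(lra)) as [K HK]. exists K. intros k Hk.
 specialize (HK k Hk). unfold R_dist in HK. pose proof (Rabs_triang_inv l (u k)).
 rewrite <- Rabs_Ropp in HK. replace (- (u k - l)) with (l - u k) in HK by ring. lra. Qed.

Lemma squeeze0 a b : (exists K, forall k, (K <= k)%nat -> Rabs (a k) <= b k) -> Un_cv b 0 -> Un_cv a 0.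
Proof. intros [K HK] Hb e He. destruct (Hb e He) as [K2 H2]. exists (K + K2)%nat. intros n Hn.
 unfold R_dist in *. rewrite Rminus_0_r. specialize (HK n ltac:(lia)). specialize (H2 n ltac:(lia)).
 rewrite Rminus_0_r in H2. eapply Rle_lt_trans. exact HK. eapply Rle_lt_trans. apply Rle_abs. auto. Qed.

Lemma cv_scal0 b c : Un_cv b 0 -> Un_cv (fun k => c * b k) 0.
Proof. intros H. replace 0 with (c * 0) by ring. apply CV_mult. apply cv_const. auto. Qed.

Lemma lam_cv (lam : nat -> R) h : incr h -> (forall n, 0 < lam n < / (INR n + 1)) -> Un_cv (fun k => lam (h k)) 0.
Proof. intros Hh Hl e He. destruct (archimed_cor1 e He) as [M [HM HM0]]. exists M. intros n Hn.
 unfold R_dist. rewrite Rminus_0_r. specialize (Hl (h n)). rewrite Rabs_right by lra.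
 eapply Rlt_trans. apply Hl. eapply Rle_lt_trans; [|exact HM]. apply Rinv_le_contravar. apply lt_0_INR; lia.
 pose proof (incr_ge h Hh n). assert (INR M <= INR (h n)) by (apply le_INR; lia). lra. Qed.

Lemma freq_sub (P : nat -> Prop) : (forall K, exists k, (K <= k)%nat /\ P k) -> exists psi, incr psi /\ forall m, P (psi m).
Proof. intros H. set (sel := fun K => proj1_sig (constructive_indefinite_description _ (H K))).
 assert (Hs : forall K, (K <= sel K)%nat /\ P (sel K)). { intros K. unfold sel. destruct (constructive_indefinite_description _ (H K)); auto. }
 set (psi := fix f m := match m with O => sel O | S m' => sel (S (f m')) end).
 exists psi. split. intros m. simpl. destruct (Hs (S (psi m))); lia.
 intros m. destruct m; simpl; apply Hs. Qed.

Lemma NE_of_signs N pot xb : in_Delta N xb ->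
  (forall i, (i < N)%nat -> (0 < dU N pot i xb -> xb i = 1) /\ (dU N pot i xb < 0 -> xb i = 0)) -> is_NE N pot xb.
Proof. intros HD Hs. split; auto. intros i t Hi Ht.
 rewrite (U_affine N pot xb i t Hi). rewrite <- (upd_id xb i) at 1. rewrite (U_affine N pot xb i (xb i) Hi).
 destruct (Hs i Hi) as [H1 H0]. unfold dU in *.
 destruct (Rtotal_order (Uext N pot (upd xb i 1) - Uext N pot (upd xb i 0)) 0) as [Hn|[Hz|Hp]].
 - rewrite (H0 Hn). nra.
 - nra.
 - rewrite (H1 Hp). nra. Qed.

Lemma seq_sign N pot (lam : nat -> R) (x : nat -> nat -> R) xb i :
  (forall k, 0 < lam k) -> (forall k, is_ND N pot (lam k) (x k)) -> Un_cv lam 0 ->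
  (forall i, (i < N)%nat -> Un_cv (fun k => x k i) (xb i)) -> (i < N)%nat ->
  (0 < dU N pot i xb -> xb i = 1) /\ (dU N pot i xb < 0 -> xb i = 0).
Proof.
  intros Hl Hx Hlam Hc Hi. pose proof (dU_cv N pot x xb i Hc) as HdU. split; intros Hs.
  - destruct (ev_pos _ _ HdU Hs) as [K HK].
    assert (Hz : Un_cv (fun k => 1 - x k i) 0).
    { apply (squeeze0 _ (fun k => (2 / dU N pot i xb) * lam k)). 2: apply cv_scal0; auto.
      exists K. intros k Hk. specialize (HK k Hk). cbv beta in HK. rewrite (proj2 (Hx k) i Hi), BR_sig by auto.
      assert (Hz : 0 < dU N pot i (x k) / lam k) by (apply Rdiv_lt_0_compat; auto; lra).
      pose proof (sig_hi _ Hz). pose proof (sig_bounds (dU N pot i (x k) / lam k)). rewrite Rabs_right by lra.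
      eapply Rle_trans. exact H. specialize (Hl k).
      replace (1 / (dU N pot i (x k) / lam k)) with (lam k / dU N pot i (x k)) by (field; lra).
      replace (2 / dU N pot i xb * lam k) with (lam k / (dU N pot i xb / 2)) by (field; lra).
      unfold Rdiv. apply Rmult_le_compat_l. lra. apply Rinv_le_contravar; lra. }
    assert (Hz2 : Un_cv (fun k => 1 - x k i) (1 - xb i)) by (apply CV_minus; [apply cv_const|auto]).
    pose proof (UL_sequence _ _ _ Hz Hz2). lra.
  - assert (Hs' : 0 < - dU N pot i xb) by lra.
    assert (HdU' : Un_cv (fun k => - dU N pot i (x k)) (- dU N pot i xb)).
    { intros e He. destruct (HdU e He) as [K HK]. exists K. intros n Hn. specialize (HK n Hn). unfold R_dist in *.
      replace (- dU N pot i (x n) - - dU N pot i xb) with (- (dU N pot i (x n) - dU N pot i xb)) by ring.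
      rewrite Rabs_Ropp; auto. }
    destruct (ev_pos _ _ HdU' Hs') as [K HK].
    assert (Hz : Un_cv (fun k => x k i) 0).
    { apply (squeeze0 _ (fun k => (2 / - dU N pot i xb) * lam k)). 2: apply cv_scal0; auto.
      exists K. intros k Hk. specialize (HK k Hk). cbv beta in HK. rewrite (proj2 (Hx k) i Hi), BR_sig by auto.
      assert (Hz : dU N pot i (x k) / lam k < 0) by (apply Rdiv_neg_pos; [lra | apply Hl]).
      pose proof (sig_lo _ Hz). pose proof (sig_bounds (dU N pot i (x k) / lam k)). rewrite Rabs_right by (destruct H0; lra).
      eapply Rle_trans. exact H. specialize (Hl k).
      replace (1 / - (dU N pot i (x k) / lam k)) with (lam k / - dU N pot i (x k)) by (field; lra).
      replace (2 / - dU N pot i xb * lam k) with (lam k / (- dU N pot i xb / 2)) by (field; lra).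
      unfold Rdiv. apply Rmult_le_compat_l. lra. apply Rinv_le_contravar; lra. }
    apply (UL_sequence _ _ _ (Hc i Hi) Hz).
Qed.

Lemma seq_Dlam0 N pot (lam : nat -> R) (x : nat -> nat -> R) xb i :
  (forall k, 0 < lam k) -> (forall k, is_ND N pot (lam k) (x k)) -> Un_cv lam 0 ->
  (forall i, (i < N)%nat -> Un_cv (fun k => x k i) (xb i)) -> (i < N)%nat -> dU N pot i xb <> 0 ->
  Un_cv (fun k => x k i * (1 - x k i) / lam k) 0.
Proof.
  intros Hl Hx Hlam Hc Hi Hn. pose proof (dU_cv N pot x xb i Hc) as HdU.
  destruct (ev_abs _ _ HdU Hn) as [K HK]. set (m := Rabs (dU N pot i xb) / 2).
  assert (Hm : 0 < m) by (unfold m; pose proof (Rabs_pos_lt _ Hn); lra).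
  apply (squeeze0 _ (fun k => (4 / (m * m)) * lam k)). 2: apply cv_scal0; auto.
  exists K. intros k Hk. specialize (HK k Hk). fold m in HK. specialize (Hl k).
  rewrite (proj2 (Hx k) i Hi), BR_sig by auto.
  set (z := dU N pot i (x k) / lam k).
  assert (Hz : z <> 0). { unfold z. intro Hz. assert (dU N pot i (x k) = 0).
    { apply (Rmult_eq_compat_r (lam k)) in Hz. unfold Rdiv in Hz. rewrite Rmult_assoc, Rinv_l in Hz; lra. }
    rewrite H, Rabs_R0 in HK. lra. }
  pose proof (sig_prod z Hz). pose proof (sig_bounds z).
  assert (Hzz : m * m / (lam k * lam k) <= z * z).
  { unfold z. replace (dU N pot i (x k) / lam k * (dU N pot i (x k) / lam k)) with (Rabs (dU N pot i (x k)) * Rabs (dU N pot i (x k)) / (lam k * lam k)).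
    2:{ rewrite <- Rabs_mult. rewrite Rabs_right. field. lra. nra. }
    unfold Rdiv. apply Rmult_le_compat_r. left. apply Rinv_0_lt_compat. nra. apply Rmult_le_compat; lra. }
  assert (H4 : 4 / (z * z) <= 4 * (lam k * lam k) / (m * m)).
  { replace (4 * (lam k * lam k) / (m * m)) with (4 / (m * m / (lam k * lam k))) by (field; split; lra).
    unfold Rdiv. apply Rmult_le_compat_l. lra. apply Rinv_le_contravar; auto. apply Rdiv_lt_0_compat; nra. }
  assert (0 <= sgm z * (1 - sgm z)) by nra.
  rewrite Rabs_right. 2:{ apply Rle_ge. unfold Rdiv. apply Rmult_le_pos. lra. left; apply Rinv_0_lt_compat; lra. }
  apply Rle_trans with (4 * (lam k * lam k) / (m * m) / lam k).
  { unfold Rdiv at 1 3. apply Rmult_le_compat_r. left; apply Rinv_0_lt_compat; lra. lra. }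
  right. field. lra.
Qed.

Lemma Jf_apply N pot lam x w i : (i < N)%nat ->
  fsum N (fun j => Jf N pot lam x i j * w j) = x i * (1 - x i) / lam * fsum N (fun j => G N pot i j x * w j) - w i.
Proof. intros Hi. unfold Jf. rewrite <- (fsum_kron N i w Hi), <- fsum_scal, <- fsum_minus.
 apply fsum_ext; intros; unfold Rdiv; ring. Qed.

Lemma fsum_G_bound N pot Bg i y w : (forall i j y, in_Delta N y -> Rabs (G N pot i j y) <= Bg) -> in_Delta N y ->
  Rabs (fsum N (fun j => G N pot i j y * w j)) <= Bg * fsum N (fun j => Rabs (w j)).
Proof. intros HB Hy. eapply Rle_trans. apply fsum_abs. rewrite <- fsum_scal. apply fsum_le; intros j Hj.
 rewrite Rabs_mult. apply Rmult_le_compat_r. apply Rabs_pos. auto. Qed.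

Lemma Qf_two N S i k a b : (i < N)%nat -> (k < N)%nat -> i <> k ->
  Qf N S (fun c => (if Nat.eqb c i then a else 0) + (if Nat.eqb c k then b else 0)) =
  a * a * S i i + a * b * (S i k + S k i) + b * b * S k k.
Proof.
  intros Hi Hk Hik. unfold Qf.
  set (v := fun c => (if Nat.eqb c i then a else 0) + (if Nat.eqb c k then b else 0)).
  assert (Hin : forall c, fsum N (fun j => S c j * v j) = a * S c i + b * S c k).
  { intros c. unfold v. rewrite <- (fsum_delta N i (a * S c i) Hi), <- (fsum_delta N k (b * S c k) Hk), <- fsum_plus.
    apply fsum_ext; intros j Hj. destruct (Nat.eqb_spec j i), (Nat.eqb_spec j k); subst; try ring; congruence. }
  rewrite (fsum_ext N _ (fun c => (if Nat.eqb c i then a * (a * S i i + b * S i k) else 0) + (if Nat.eqb c k then b * (a * S k i + b * S k k) else 0))).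
  - rewrite fsum_plus, fsum_delta, fsum_delta by auto. ring.
  - intros c Hc. rewrite Hin. unfold v. destruct (Nat.eqb_spec c i), (Nat.eqb_spec c k); subst; try ring; congruence.
Qed.

Lemma nonsingular_ext N J J' : (forall i j, (i < N)%nat -> (j < N)%nat -> J i j = J' i j) -> nonsingular N J' -> nonsingular N J.
Proof. intros HE H v Hv. apply H. intros i Hi. rewrite <- (Hv i Hi). apply fsum_ext; intros j Hj. rewrite HE; auto. Qed.

Lemma stable_ext N J J' : (forall i j, (i < N)%nat -> (j < N)%nat -> J i j = J' i j) -> (linearly_stable N J' <-> linearly_stable N J).
Proof. intros HE. unfold linearly_stable, is_eigenvalue.
 assert (Hs : forall u i, (i < N)%nat -> fsum N (fun j => J i j * u j) = fsum N (fun j => J' i j * u j)).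
 { intros u i Hi. apply fsum_ext; intros j Hj. rewrite HE; auto. }
 split; intros H a b [u [w [Hnz He]]]; apply (H a b); exists u, w; split; auto; intros i Hi.
 - rewrite <- !Hs by auto. apply He; auto.
 - rewrite !Hs by auto. apply He; auto. Qed.

Lemma D_cv (s : nat -> nat -> R) l a : Un_cv (fun k => s k a) (l a) ->
  Un_cv (fun k => s k a * (1 - s k a)) (l a * (1 - l a)).
Proof. intros H. apply CV_mult; auto. apply CV_minus; auto. apply cv_const. Qed.

Lemma d1_cv N (s : nat -> nat -> R) l p : (forall i, (i < N)%nat -> Un_cv (fun k => s k i) (l i)) ->
  Un_cv (fun k => d1 N (s k) p) (d1 N l p).
Proof. intros H. unfold d1. apply (fsum_cv N (fun k i => Rabs (s k i - p i))). intros i Hi.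
 apply (cv_cvabs (fun k => s k i - p i)). apply CV_minus; auto. apply cv_const. Qed.

Lemma mixed_part N pot delta : regular_potential_game N pot -> 0 < delta ->
  exists lamM, 0 < lamM /\ forall lam, 0 < lam < lamM -> forall x, is_ND N pot lam x ->
   (forall p, pureNE N pot p -> d1 N x p > 2 * delta) ->
   nonsingular N (Jf N pot lam x) /\ ~ linearly_stable N (Jf N pot lam x).
Proof.
  intros Hreg Hd. apply NNPP; intro Hneg.
  assert (Hseq : forall n : nat, exists lx : R * (nat -> R), (0 < fst lx < / (INR n + 1)) /\ is_ND N pot (fst lx) (snd lx) /\
     (forall p, pureNE N pot p -> d1 N (snd lx) p > 2 * delta) /\
     ~ (nonsingular N (Jf N pot (fst lx) (snd lx)) /\ ~ linearly_stable N (Jf N pot (fst lx) (snd lx)))).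
  { intros n. apply NNPP; intro Hn. apply Hneg. exists (/ (INR n + 1)). split. apply Rinv_0_lt_compat; pose proof (pos_INR n); lra.
    intros lam Hl x Hx Hf. apply NNPP; intro Hb. apply Hn. exists (lam, x). simpl. auto. }
  set (lx := fun n => proj1_sig (constructive_indefinite_description _ (Hseq n))).
  assert (Hlx : forall n, (0 < fst (lx n) < / (INR n + 1)) /\ is_ND N pot (fst (lx n)) (snd (lx n)) /\
     (forall p, pureNE N pot p -> d1 N (snd (lx n)) p > 2 * delta) /\
     ~ (nonsingular N (Jf N pot (fst (lx n)) (snd (lx n))) /\ ~ linearly_stable N (Jf N pot (fst (lx n)) (snd (lx n))))).
  { intros n. unfold lx. destruct (constructive_indefinite_description _ (Hseq n)); auto. }
  destruct (bwN N (fun n => snd (lx n)) 1) as [phi [Hphi [xb Hxb]]].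
  { intros k i Hi. destruct (Hlx k) as [_ [HND _]]. pose proof (ND_bounds N pot _ _ i HND Hi). rewrite Rabs_right; lra. }
  set (X := fun k => snd (lx (phi k))). set (Lm := fun k => fst (lx (phi k))).
  assert (HLpos : forall k, 0 < Lm k) by (intros k; apply (Hlx (phi k))).
  assert (HXnd : forall k, is_ND N pot (Lm k) (X k)) by (intros k; apply (Hlx (phi k))).
  assert (HLcv : Un_cv Lm 0) by (apply (lam_cv (fun n => fst (lx n)) phi Hphi); intros n; apply (Hlx n)).
  assert (HXcv : forall i, (i < N)%nat -> Un_cv (fun k => X k i) (xb i)) by exact Hxb.
  assert (HDelta : in_Delta N xb).
  { intros i Hi. split.
    - apply (lim_le _ _ 0 (HXcv i Hi)). intros k. pose proof (ND_bounds N pot _ _ i (HXnd k) Hi). lra.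
    - apply (lim_ge _ _ 1 (HXcv i Hi)). intros k. pose proof (ND_bounds N pot _ _ i (HXnd k) Hi). lra. }
  assert (HNE : is_NE N pot xb).
  { apply NE_of_signs; auto. intros i Hi. apply (seq_sign N pot Lm X xb i); auto. }
  assert (Hfar : forall p, pureNE N pot p -> 2 * delta <= d1 N xb p).
  { intros p Hp. apply (lim_le _ _ _ (d1_cv N X xb p HXcv)). intros k. left. apply (Hlx (phi k)); auto. }
  assert (Hnp : ~ is_pure N xb).
  { intros Hp. specialize (Hfar xb (conj HNE Hp)). rewrite d1_self in Hfar. lra. }
  unfold is_pure in Hnp. apply not_all_ex_not in Hnp as [k0 Hk0]. apply imply_to_and in Hk0 as [Hk0 Hk0m].
  assert (Hmk0 : mixing N xb k0).
  { split; auto. destruct (HDelta k0 Hk0) as [[A1|A1] [A2|A2]]; auto; exfalso; apply Hk0m; auto. }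
  destruct (Hreg xb HNE) as [Hqs [Hh [HH Hinv]]].
  destruct (bound_G N pot) as [Bg [HBg HBG]].
  assert (Hex : exists i, mixing N xb i /\ Hh i k0 <> 0).
  { apply NNPP; intro Hno.
    assert (Hz := Hinv (fun j => if Nat.eqb j k0 then 1 else 0)).
    assert (1 = 0); [|lra].
    replace 1 with (if Nat.eqb k0 k0 then 1 else 0) by (rewrite Nat.eqb_refl; auto).
    apply Hz; auto.
    - intros j Hj Hm. destruct (Nat.eqb_spec j k0); subst; auto. contradiction.
    - intros i Hi. rewrite (fsum_ext N _ (fun j => if Nat.eqb j k0 then Hh i k0 else 0)).
      + rewrite fsum_delta by auto. apply NNPP; intro Hne. apply Hno. exists i. split; auto.
      + intros j Hj. destruct (Nat.eqb_spec j k0); subst; ring. }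
  destruct Hex as [i [Hmi HHi]].
  assert (Hi : (i < N)%nat) by apply Hmi.
  assert (Hgdef : Hh i k0 = G N pot i k0 xb).
  { rewrite (hess_id N pot i k0 xb (Hh i k0) Hi Hk0 (HH i k0 Hmi Hmk0)). apply G_sym. }
  set (g := G N pot i k0 xb).
  assert (Hg : g <> 0) by (unfold g; rewrite <- Hgdef; auto).
  assert (Hik : i <> k0). { intro E. subst i. unfold g in Hg. rewrite G_diag in Hg. auto. }
  set (Dbi := xb i * (1 - xb i)). set (Dbk := xb k0 * (1 - xb k0)).
  assert (HDbi : 0 < Dbi) by (unfold Dbi; destruct Hmi as [_ Hm]; nra).
  assert (HDbk : 0 < Dbk) by (unfold Dbk; destruct Hmk0 as [_ Hm]; nra).
  assert (E1 : exists K1, forall k, (K1 <= k)%nat -> ~ linearly_stable N (Jf N pot (Lm k) (X k))).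
  { assert (Hgg : 0 < g * g) by (pose proof (Rsqr_pos_lt g Hg); unfold Rsqr in *; lra).
    destruct (ev_pos (fun k => G N pot i k0 (X k) * g) (g * g)) as [Ka HKa]; auto.
    { apply CV_mult. apply G_cv; auto. apply cv_const. }
    destruct (ev_pos (fun k => X k i * (1 - X k i)) Dbi) as [Kb HKb]; auto. apply D_cv; auto.
    destruct (ev_pos (fun k => X k k0 * (1 - X k k0)) Dbk) as [Kc HKc]; auto. apply D_cv; auto.
    set (T := 2 * (g * g) / Dbi + 2 / Dbk).
    assert (HT : 0 < T) by (unfold T; apply Rplus_lt_0_compat; apply Rdiv_lt_0_compat; lra).
    destruct (ev_lt Lm 0 (g * g / T)) as [Kd HKd]; auto. apply Rdiv_lt_0_compat; auto.
    exists (Ka + Kb + Kc + Kd)%nat. intros k Hk Hst.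
    specialize (HKa k ltac:(lia)). specialize (HKb k ltac:(lia)). specialize (HKc k ltac:(lia)). specialize (HKd k ltac:(lia)).
    cbv beta in HKa, HKb, HKc.
    set (x := X k) in *. set (lam := Lm k) in *.
    assert (Hl : 0 < lam) by apply HLpos.
    set (d := fun a => x a * (1 - x a)).
    assert (Hdp : forall a, (a < N)%nat -> 0 < d a).
    { intros a Ha. pose proof (ND_bounds N pot lam x a (HXnd k) Ha). unfold d; nra. }
    set (S := fun a b => G N pot a b x / lam - (if Nat.eqb a b then 1 else 0) / d a).
    destruct (spectral_pos N d S (Jf N pot lam x)) as [u [mu [Hmu [Hnz Heig]]]]; auto.
    - intros a b Ha Hb. unfold S. rewrite G_sym. destruct (Nat.eqb_spec a b), (Nat.eqb_spec b a); subst; try congruence; auto.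
      unfold Rdiv. ring.
    - intros a b Ha Hb. unfold S, Jf, d. pose proof (ND_bounds N pot lam x a (HXnd k) Ha). field. lra.
    - exists (fun c => (if Nat.eqb c i then g else 0) + (if Nat.eqb c k0 then 1 else 0)).
      rewrite Qf_two by auto. unfold S. rewrite !Nat.eqb_refl.
      replace (Nat.eqb i k0) with false by (symmetry; apply Nat.eqb_neq; auto).
      replace (Nat.eqb k0 i) with false by (symmetry; apply Nat.eqb_neq; auto).
      rewrite !G_diag. rewrite (G_sym N pot k0 i x).
      assert (Hdi : Dbi / 2 < d i) by exact HKb. assert (Hdk : Dbk / 2 < d k0) by exact HKc.
      assert (H1 : g * g / d i < 2 * (g * g) / Dbi).
      { apply Rmult_lt_reg_r with (d i * Dbi). nra. unfold Rdiv. field_simplify; try lra. nra. }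
      assert (H2 : 1 / d k0 < 2 / Dbk).
      { apply Rmult_lt_reg_r with (d k0 * Dbk). nra. unfold Rdiv. field_simplify; try lra. }
      assert (H3 : T < g * g / lam).
      { apply Rmult_lt_reg_r with (lam / T). apply Rdiv_lt_0_compat; lra.
        replace (T * (lam / T)) with lam by (field; lra). replace (g * g / lam * (lam / T)) with (g * g / T) by (field; lra). lra. }
      assert (H4 : g * g / lam < 2 * (g * G N pot i k0 x) / lam).
      { unfold Rdiv. apply Rmult_lt_compat_r. apply Rinv_0_lt_compat; lra. lra. }
      unfold T in H3. replace (g * g * (0 / lam - 1 / d i) + g * 1 * (G N pot i k0 x / lam - 0 / d i + (G N pot i k0 x / lam - 0 / d k0)) + 1 * 1 * (0 / lam - 1 / d k0))
        with (2 * (g * G N pot i k0 x) / lam - g * g / d i - 1 / d k0) by (field; split; [|split]; lra).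
      lra.
    - apply Rlt_irrefl with 0. apply Rlt_trans with mu; auto. apply (Hst mu 0). exists u, (fun _ => 0). split.
      + destruct Hnz as [a [Ha Hua]]. exists a. auto.
      + intros a Ha. split. rewrite Heig by auto. ring. rewrite fsum_zero. ring. intros; ring. }
  assert (E2 : exists K2, forall k, (K2 <= k)%nat -> nonsingular N (Jf N pot (Lm k) (X k))).
  { apply NNPP; intro Hn.
    assert (Hfreq : forall K, exists k, (K <= k)%nat /\ ~ nonsingular N (Jf N pot (Lm k) (X k))).
    { intros K. apply NNPP; intro HK. apply Hn. exists K. intros k Hk. apply NNPP; intro Hk2. apply HK. eauto. }
    destruct (freq_sub _ Hfreq) as [psi [Hpsi Hpsin]].
    assert (Hw : forall m, exists w, (forall a, (a < N)%nat -> fsum N (fun j => Jf N pot (Lm (psi m)) (X (psi m)) a j * w j) = 0) /\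
                   fsum N (fun j => Rabs (w j)) = 1).
    { intros m. specialize (Hpsin m). unfold nonsingular in Hpsin. apply not_all_ex_not in Hpsin as [v Hv].
      apply imply_to_and in Hv as [Hv1 Hv2]. apply not_all_ex_not in Hv2 as [i0 Hi0]. apply imply_to_and in Hi0 as [Hi0 Hvi].
      set (s := fsum N (fun j => Rabs (v j))).
      assert (Hs : 0 < s). { unfold s. eapply Rlt_le_trans. 2: apply (fsum_term_le N (fun j => Rabs (v j)) i0); auto.
        apply Rabs_pos_lt; auto. intros; apply Rabs_pos. }
      exists (fun j => / s * v j). split.
      - intros a Ha. rewrite (fsum_ext N _ (fun j => / s * (Jf N pot (Lm (psi m)) (X (psi m)) a j * v j))) by (intros; ring).
        rewrite fsum_scal, Hv1 by auto. ring.
      - rewrite (fsum_ext N _ (fun j => / s * Rabs (v j))). rewrite fsum_scal. fold s. field. lra.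
        intros j Hj. rewrite Rabs_mult, Rabs_right. auto. left; apply Rinv_0_lt_compat; auto. }
    set (Wq := fun m => proj1_sig (constructive_indefinite_description _ (Hw m))).
    assert (HWq : forall m, (forall a, (a < N)%nat -> fsum N (fun j => Jf N pot (Lm (psi m)) (X (psi m)) a j * Wq m j) = 0) /\
                   fsum N (fun j => Rabs (Wq m j)) = 1).
    { intros m. unfold Wq. destruct (constructive_indefinite_description _ (Hw m)); auto. }
    destruct (bwN N Wq 1) as [rho [Hrho [wb Hwb]]].
    { intros m a Ha. rewrite <- (proj2 (HWq m)). apply (fsum_term_le N (fun j => Rabs (Wq m j))); auto. intros; apply Rabs_pos. }
    set (X2 := fun m => X (psi (rho m))). set (L2 := fun m => Lm (psi (rho m))). set (W2 := fun m => Wq (rho m)).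
    assert (Hidx : incr (fun m => psi (rho m))) by (apply incr_comp; auto).
    assert (HX2 : forall a, (a < N)%nat -> Un_cv (fun m => X2 m a) (xb a)).
    { intros a Ha. apply (cv_sub (fun k => X k a)); auto. }
    assert (HL2 : Un_cv L2 0) by (apply (cv_sub Lm); auto).
    assert (HL2p : forall m, 0 < L2 m) by (intros; apply HLpos).
    assert (HX2nd : forall m, is_ND N pot (L2 m) (X2 m)) by (intros; apply HXnd).
    assert (Heq : forall m a, (a < N)%nat -> W2 m a = X2 m a * (1 - X2 m a) / L2 m * fsum N (fun j => G N pot a j (X2 m) * W2 m j)).
    { intros m a Ha. pose proof (proj1 (HWq (rho m)) a Ha) as E. rewrite Jf_apply in E by auto. unfold W2, X2, L2. lra. }
    assert (Hsum1 : fsum N (fun j => Rabs (wb j)) = 1).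
    { apply (UL_sequence (fun m => fsum N (fun j => Rabs (W2 m j)))).
      - apply (fsum_cv N (fun m j => Rabs (W2 m j))). intros j Hj. apply (cv_cvabs (fun m => W2 m j)). apply Hwb; auto.
      - intros e He. exists 0%nat. intros n _. unfold R_dist. unfold W2. rewrite (proj2 (HWq (rho n))). rewrite Rminus_diag, Rabs_R0; lra. }
    assert (Key1 : forall a, (a < N)%nat -> ~ mixing N xb a -> wb a = 0).
    { intros a Ha Hma.
      assert (Hdu : dU N pot a xb <> 0).
      { destruct (HDelta a Ha) as [[A1|A1] [A2|A2]]; try (exfalso; apply Hma; split; auto; lra).
        - destruct (Hqs a Ha) as [Q1 _]. specialize (Q1 A2). unfold dU. lra.
        - destruct (Hqs a Ha) as [_ Q0]. specialize (Q0 (eq_sym A1)). unfold dU. lra. }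
      pose proof (seq_Dlam0 N pot L2 X2 xb a HL2p HX2nd HL2 HX2 Ha Hdu) as HD0.
      assert (Hz : Un_cv (fun m => W2 m a) 0).
      { apply (squeeze0 _ (fun m => Bg * (X2 m a * (1 - X2 m a) / L2 m))).
        - exists 0%nat. intros m _. rewrite Heq by auto. rewrite Rabs_mult.
          pose proof (fsum_G_bound N pot Bg a (X2 m) (W2 m) HBG (proj1 (HX2nd m))). unfold W2 in H at 2. rewrite (proj2 (HWq (rho m))) in H.
          pose proof (ND_bounds N pot _ _ a (HX2nd m) Ha). specialize (HL2p m).
          rewrite (Rabs_right (X2 m a * (1 - X2 m a) / L2 m)). 2:{ apply Rle_ge. unfold Rdiv. apply Rmult_le_pos. nra. left; apply Rinv_0_lt_compat; lra. }
          assert (0 <= X2 m a * (1 - X2 m a) / L2 m). { unfold Rdiv. apply Rmult_le_pos. nra. left; apply Rinv_0_lt_compat; lra. }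
          nra.
        - replace 0 with (Bg * 0) by ring. apply CV_mult. apply cv_const. auto. }
      apply (UL_sequence (fun m => W2 m a)); auto. apply Hwb; auto. }
    assert (Key2 : forall a, mixing N xb a -> fsum N (fun j => G N pot a j xb * wb j) = 0).
    { intros a Hma. assert (Ha : (a < N)%nat) by apply Hma.
      set (Dba := xb a * (1 - xb a)). assert (HDba : 0 < Dba) by (unfold Dba; destruct Hma as [_ Hm]; nra).
      destruct (ev_pos (fun m => X2 m a * (1 - X2 m a)) Dba) as [Ke HKe]; auto. apply D_cv; auto.
      apply (UL_sequence (fun m => fsum N (fun j => G N pot a j (X2 m) * W2 m j))).
      - apply (fsum_cv N (fun m j => G N pot a j (X2 m) * W2 m j)). intros j Hj. apply CV_mult. apply G_cv; auto. apply Hwb; auto.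
      - apply (squeeze0 _ (fun m => (2 / Dba) * L2 m)). 2: apply cv_scal0; auto.
        exists Ke. intros m Hm. specialize (HKe m Hm). cbv beta in HKe. specialize (HL2p m).
        assert (HD : 0 < X2 m a * (1 - X2 m a)) by lra.
        assert (E : fsum N (fun j => G N pot a j (X2 m) * W2 m j) = L2 m * W2 m a / (X2 m a * (1 - X2 m a))).
        { pose proof (ND_bounds N pot _ _ a (HX2nd m) Ha). rewrite (Heq m a Ha). field. repeat split; lra. }
        rewrite E. assert (Rabs (W2 m a) <= 1).
        { rewrite <- (proj2 (HWq (rho m))). apply (fsum_term_le N (fun j => Rabs (W2 m j))); auto. intros; apply Rabs_pos. }
        unfold Rdiv. rewrite !Rabs_mult, (Rabs_right (L2 m)), (Rabs_right (/ _)) by (left; try apply Rinv_0_lt_compat; lra).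
        apply Rle_trans with (L2 m * 1 * / (Dba / 2)).
        + apply Rmult_le_compat. pose proof (Rabs_pos (W2 m a)); nra. left; apply Rinv_0_lt_compat; lra.
          pose proof (Rabs_pos (W2 m a)); nra. apply Rinv_le_contravar; lra.
        + right. field. lra. }
    assert (Hall : forall a, (a < N)%nat -> wb a = 0).
    { apply Hinv. exact Key1. intros a Hma. rewrite <- (Key2 a Hma). apply fsum_ext. intros j Hj.
      destruct (classic (mixing N xb j)) as [Hmj|Hmj].
      - rewrite (hess_id N pot a j xb (Hh a j) (proj1 Hma) Hj (HH a j Hma Hmj)). rewrite G_sym. auto.
      - rewrite (Key1 j Hj Hmj). ring. }
    rewrite fsum_zero in Hsum1. lra. intros a Ha. rewrite Hall by auto. apply Rabs_R0. }
  destruct E1 as [K1 HK1]. destruct E2 as [K2 HK2].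
  destruct (Hlx (phi (K1 + K2)%nat)) as [_ [_ [_ Hbad]]]. apply Hbad. split.
  - apply (HK2 (K1 + K2)%nat). lia.
  - apply (HK1 (K1 + K2)%nat). lia.
Qed.

Theorem proposition1 (N : nat) (u : nat -> (nat -> bool) -> R)
  (pot : (nat -> bool) -> R)
  (Hpot : is_potential N u pot)
  (Hreg : regular_potential_game N pot)
  (lam1 : R) (branch : (nat -> R) -> R -> (nat -> R))
  (Hbr : is_branch_system N pot lam1 branch) :
  exists lam0, 0 < lam0 /\
    forall lam, 0 < lam < lam0 ->
      forall x, is_ND N pot lam x ->
        forall J, is_jacobian N pot lam x J ->
          nonsingular N J /\
          (linearly_stable N J <-> pure_ND N pot branch lam x).
Proof.
  destruct (pure_part N pot lam1 branch Hreg Hbr) as [delta [lamP [Hd [HlP [HlP1 HP]]]]].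
  destruct (mixed_part N pot delta Hreg Hd) as [lamM [HlM HM]].
  exists (Rmin lamP lamM). split. apply Rmin_pos; auto.
  intros lam Hl x Hx J HJ.
  assert (Hl1 : lam < lamP) by (eapply Rlt_le_trans; [apply Hl|apply Rmin_l]).
  assert (Hl2 : lam < lamM) by (eapply Rlt_le_trans; [apply Hl|apply Rmin_r]).
  assert (HJf : forall i j, (i < N)%nat -> (j < N)%nat -> J i j = Jf N pot lam x i j)
    by (apply jac_formula; auto; lra).
  destruct (HP lam ltac:(lra) x Hx) as [Ha Hb].
  destruct (classic (exists p, pureNE N pot p /\ d1 N x p <= 2 * delta)) as [Hn|Hf].
  - destruct (Ha Hn) as [NS [ST PN]]. split.
    + apply (nonsingular_ext N J (Jf N pot lam x) HJf NS).
    + split; intros _; auto. apply (stable_ext N J (Jf N pot lam x) HJf); auto.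
  - assert (Hfar : forall p, pureNE N pot p -> d1 N x p > 2 * delta).
    { intros p Hp. apply Rnot_le_lt. intro Hle. apply Hf. eauto. }
    destruct (HM lam ltac:(lra) x Hx Hfar) as [NS NST]. split.
    + apply (nonsingular_ext N J (Jf N pot lam x) HJf NS).
    + split; intros H.
      * exfalso. apply NST. apply (stable_ext N J (Jf N pot lam x) HJf); auto.
      * exfalso. apply (Hb Hfar H).
Qed.
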